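(* Let $X$ be a compact Hausdorff space and $k>0$. For a bundle $(E,X,\pi)$ of complete metric spaces bounded by $k$, let $\mathcal R(E)$ assign to $x$ the fibre $E_x$, with maps $\sigma_\mu$ defined as follows: for an ultrafilter $\mu$ on $X$ converging to $x$ and $f\in E_x$, $\sigma_\mu(f)\in\int_XE_y\,d\mu$ is the limit of the Cauchy filter generated by the sets $A_W$ ($W$ open neighbourhood of $f$); for a set $S$, a map $M:S\to X$ and an ultrafilter $\mu$ on $S$ with $M\mu\to x$, if $\sigma_{M\mu}(f)=(b_y)_{y\in X}$ then $\sigma_\mu(f)=(b_{M(s)})_{s\in S}$; on morphisms $\mathcal R(\psi)_x=\psi|_{E_x}$. Then $\mathcal R(E)$ is a left ultrafunctor from $X$ to $\mathsf{k\text{-}CompMet}$, $\mathcal R$ is a functor, and $\mathcal L$ and $\mathcal R$ are mutually quasi-inverse equivalences of categories $\mathrm{LeftUlt}(X,\mathsf{k\text{-}CompMet})\simeq\mathrm{Bun}(\mathsf{k\text{-}CompMet},X)$ (with $\mathcal L\dashv\mathcal R$ and unit and counit isomorphisms).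
   Context: Ultrafilter conventions: $\delta_s$ principal; pushforward $g\mu=\{B:g^{-1}B\in\mu\}$; $\int_S\nu_sd\mu=\{B:\{s:B\in\nu_s\}\in\mu\}$; for compact Hausdorff $X$, $\int_Sx_sd\mu$ is the limit of the pushforward of $\mu$ along $s\mapsto x_s$. $\mathsf{k\text{-}CompMet}$: complete metric spaces with distances $\le k$ and 1-Lipschitz maps; ultraproduct $\int_SM_sd\mu=\prod M_s/\{\lim_\mu d(a_s,b_s)=0\}$ with metric $\lim_\mu d(a_s,b_s)$ (classes may be given on a set of $\mu$). Left ultrafunctor from $X$ to $\mathsf{k\text{-}CompMet}$: objects $\mathcal F(x)$ and, for each set $S$, family $(x_s)$ in $X$, ultrafilter $\mu$ on $S$, a 1-Lipschitz $\sigma_\mu:\mathcal F(\int_Sx_sd\mu)\to\int_S\mathcal F(x_s)d\mu$ with (i) $\sigma_{\delta_{s_0}}$ followed by $\int_S\mathcal F(x_s)d\delta_{s_0}\cong\mathcal F(x_{s_0})$ is the identity, (ii) for $\mu$ on $S$, $(\nu_s)_{s\in S}$ on $T$, $(x_t)_{t\in T}$ with $y_s=\int_Tx_td\nu_s$: $\Delta\circ\sigma_{\int_S\nu_sd\mu}=(\int_S\sigma_{\nu_s}d\mu)\circ\sigma_\mu$ where $\sigma_\mu$ is for the family $(y_s)$ and $\Delta((b_t)_{t})=((b_t)_t)_{s}$. Morphisms: natural transformations of left ultrafunctors, families of 1-Lipschitz $\alpha_x$ with $\sigma^{\mathcal G}_\mu\circ\alpha_{\int x_sd\mu}=(\int_S\alpha_{x_s}d\mu)\circ\sigma^{\mathcal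 F}_\mu$. Bundle of complete metric spaces bounded by $k$ over $X$: $\pi:E\to X$ surjective, fibres $E_x$ complete metric with distances $\le k$, with (1) global distance on $E\times_XE$ upper semicontinuous, (2) $\pi$ continuous open, (3) for open $W$ and $f\in W$ there are an open $V\ni f$ and $\epsilon>0$ with $V\subseteq V_\epsilon\subseteq W$ ($V_\epsilon=\{g:\exists h\in V,\pi g=\pi h,d(g,h)<\epsilon\}$). Morphisms: continuous maps over $X$ that are 1-Lipschitz on fibres. $\mathcal L(\mathcal F)=\coprod_x\mathcal F(x)$ with the unique topology in which an ultrafilter $\eta$ converges to $f$ iff $\pi\eta\to\pi(f)$ and $\coprod_xB(b_x,\epsilon)\in\eta$ for all $\epsilon>0$, where $(b_x)$ represents $\sigma_{\pi\eta}(f)$ (identity family on $X$); $\mathcal L(\alpha)|_{\mathcal F(x)}=\alpha_x$. $A_W=\{(b_y)_{y\in X}\in\int_XE_yd\mu:\exists U\in\mu,\exists\epsilon>0,\coprod_{y\in U}B(b_y,\epsilon)\subseteq W\}$. *)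

(* Defs.v *)
From Stdlib Require Import Reals List Classical ClassicalEpsilon ProofIrrelevance.
Open Scope R_scope.

Record ultrafilter (S : Type) := {
  uf :> (S -> Prop) -> Prop;
  uf_T : uf (fun _ => True);
  uf_0 : ~ uf (fun _ => False);
  uf_up : forall A B : S -> Prop, (forall s, A s -> B s) -> uf A -> uf B;
  uf_I : forall A B : S -> Prop, uf A -> uf B -> uf (fun s => A s /\ B s);
  uf_max : forall A : S -> Prop, uf A \/ uf (fun s => ~ A s) }.
Arguments uf {S}.
Arguments uf_T {S}. Arguments uf_0 {S}. Arguments uf_up {S}.
Arguments uf_I {S}. Arguments uf_max {S}.

Definition principal {S : Type} (s0 : S) : ultrafilter S.
Proof.
  refine {| uf := fun A => A s0 |}; simpl; auto.
  intros A; apply classic.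
Defined.

Definition push {S T : Type} (g : S -> T) (mu : ultrafilter S) : ultrafilter T.
Proof.
  refine {| uf := fun B => mu (fun s => B (g s)) |}.
  - exact (uf_T mu).
  - exact (uf_0 mu).
  - intros A B h; apply uf_up; intros s; apply h.
  - intros A B; apply (uf_I mu).
  - intros A; apply (uf_max mu (fun s => A (g s))).
Defined.

(* integral  \int_S nu_s dmu = {B : {s : B in nu_s} in mu} *)
Definition uint {S T : Type} (mu : ultrafilter S) (nu : S -> ultrafilter T)
  : ultrafilter T.
Proof.
  refine {| uf := fun B => mu (fun s => nu s B) |}.
  - apply (uf_up mu (fun _ => True)); [intros s _; apply uf_T | apply uf_T].
  - intros h; apply (uf_0 mu); apply (uf_up mu _ _ (fun s hs => uf_0 (nu s) hs) h).
  - intros A B hAB; apply uf_up; intros s; apply uf_up; exact hAB.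
  - intros A B hA hB; apply (uf_up mu _ _ (fun s h => uf_I (nu s) A B (proj1 h) (proj2 h))).
    apply uf_I; assumption.
  - intros A. destruct (uf_max mu (fun s => nu s A)) as [h|h]; [left; exact h|right].
    apply (uf_up mu _ _ (fun s hs => match uf_max (nu s) A with
                                     | or_introl a => False_ind _ (hs a)
                                     | or_intror b => b end) h).
Defined.

Lemma uf_inhabited {S : Type} (mu : ultrafilter S) : inhabited S.
Proof.
  destruct (classic (inhabited S)) as [h|h]; [exact h|].
  exfalso; apply (uf_0 mu).
  apply (uf_up mu (fun _ => True)); [intros s _; apply h; exact (inhabits s)|apply uf_T].
Qed.

Definition ulimR {S : Type} (mu : ultrafilter S) (f : S -> R) : R :=
  epsilon (inhabits 0) (fun r => forall eps, 0 < eps -> mu (fun s => Rabs (f s - r) < eps)).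

Record Space := {
  pt :> Type;
  opn : (pt -> Prop) -> Prop;
  opn_full : opn (fun _ => True);
  opn_inter : forall A B, opn A -> opn B -> opn (fun x => A x /\ B x);
  opn_union : forall (I : Type) (F : I -> pt -> Prop),
      (forall i, opn (F i)) -> opn (fun x => exists i, F i x) }.
Arguments opn {s}.

Definition hausdorff_space (X : Space) : Prop :=
  forall x y : X, x <> y -> exists U V, opn U /\ opn V /\ U x /\ V y /\
    forall z, U z -> V z -> False.

Definition compact_space (X : Space) : Prop :=
  forall (I : Type) (U : I -> X -> Prop), (forall i, opn (U i)) ->
    (forall x, exists i, U i x) ->
    exists l : list I, forall x, exists i, In i l /\ U i x.

Definition tcontinuous {X Y : Space} (f : X -> Y) : Prop :=
  forall W : Y -> Prop, opn W -> opn (fun x => W (f x)).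

Definition open_map {X Y : Space} (f : X -> Y) : Prop :=
  forall U : X -> Prop, opn U -> opn (fun y => exists x, U x /\ f x = y).

Definition conv {X : Space} (nu : ultrafilter X) (p : X) : Prop :=
  forall W, opn W -> W p -> nu W.

(* the limit of an ultrafilter (unique in a compact_space Hausdorff space) *)
Definition ulimX {X : Space} (nu : ultrafilter X) : X :=
  epsilon (uf_inhabited nu) (conv nu).

(* \int_S x_s dmu : limit of the pushforward of mu along s |-> x_s *)
Definition ulim {X : Space} {S : Type} (x : S -> X) (mu : ultrafilter S) : X :=
  ulimX (push x mu).

Definition complete_dist {M : Type} (d : M -> M -> R) : Prop :=
  forall u : nat -> M,
    (forall eps, 0 < eps -> exists N, forall m n, (N <= m)%nat -> (N <= n)%nat -> d (u m) (u n) < eps) ->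
    exists l, forall eps, 0 < eps -> exists N, forall n, (N <= n)%nat -> d (u n) l < eps.

(* M with d is an object of k-CompMet: complete metric space, distances <= k *)
Definition is_kmet (k : R) {M : Type} (d : M -> M -> R) : Prop :=
  (forall a b, 0 <= d a b /\ d a b <= k) /\
  (forall a b, d a b = 0 <-> a = b) /\
  (forall a b, d a b = d b a) /\
  (forall a b c, d a c <= d a b + d b c) /\
  complete_dist d.

(* elements: families defined on a set belonging to mu *)
Definition UP {S : Type} (mu : ultrafilter S) (M : S -> Type) : Type :=
  { a : forall s, option (M s) | mu (fun s => a s <> None) }.

Definition up_dist {S : Type} (mu : ultrafilter S) {M : S -> Type}
  (D : forall s, M s -> M s -> R) (a b : UP mu M) : R :=
  ulimR mu (fun s => match proj1_sig a s, proj1_sig b s with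
                     | Some u, Some v => D s u v
                     | _, _ => 0 end).

(* \int_S phi_s dmu : componentwise map *)
Definition upmap {S : Type} {mu : ultrafilter S} {M N : S -> Type}
  (phi : forall s, M s -> N s) (a : UP mu M) : UP mu N.
Proof.
  exists (fun s => option_map (phi s) (proj1_sig a s)).
  refine (uf_up mu _ _ _ (proj2_sig a)).
  intros s h; cbv beta in *; destruct (proj1_sig a s); simpl;
     [intro E; discriminate E|contradiction].
Defined.

(* Delta : \int_T M_t d(\int_S nu_s dmu) -> \int_S (\int_T M_t dnu_s) dmu,
   ((b_t)_t) |-> (((b_t)_t)_s) *)
Definition Delta {S T : Type} {mu : ultrafilter S} {nu : S -> ultrafilter T}
  {M : T -> Type} (a : UP (uint mu nu) M) : UP mu (fun s => UP (nu s) M).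
Proof.
  exists (fun s => match excluded_middle_informative
                          (nu s (fun t => proj1_sig a t <> None)) with
                   | left h => Some (exist _ (proj1_sig a) h)
                   | right _ => None end).
  refine (uf_up mu _ _ _ (proj2_sig a)).
  intros s h; cbv beta in *;
     destruct (excluded_middle_informative _) as [h'|h'];
     [intro E; discriminate E|contradiction].
Defined.

Record LUdata (X : Space) := {
  lu_car : X -> Type;
  lu_d : forall x, lu_car x -> lu_car x -> R;
  lu_ne : forall x, inhabited (lu_car x);
  lu_sig : forall (S : Type) (x : S -> X) (mu : ultrafilter S),
      lu_car (ulim x mu) -> UP mu (fun s => lu_car (x s)) }.
Arguments lu_car {X}. Arguments lu_d {X}. Arguments lu_ne {X}. Arguments lu_sig {X}.

Definition is_LeftUlt {X : Space} (k : R) (F : LUdata X) : Prop :=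
  (forall x, is_kmet k (lu_d F x)) /\
  (forall S (x : S -> X) (mu : ultrafilter S) (a b : lu_car F (ulim x mu)),
      up_dist mu (fun s => lu_d F (x s)) (lu_sig F S x mu a) (lu_sig F S x mu b)
      <= lu_d F _ a b) /\
  (* (i) *)
  (forall S (x : S -> X) (s0 : S) (e : ulim x (principal s0) = x s0)
          (a : lu_car F (ulim x (principal s0))),
      proj1_sig (lu_sig F S x (principal s0) a) s0 = Some (eq_rect _ (lu_car F) a _ e)) /\
  (* (ii) *)
  (forall S T (mu : ultrafilter S) (nu : S -> ultrafilter T) (x : T -> X)
          (e : ulim (fun s => ulim x (nu s)) mu = ulim x (uint mu nu))
          (a : lu_car F (ulim (fun s => ulim x (nu s)) mu)),
      up_dist mu (fun s => up_dist (nu s) (fun t => lu_d F (x t)))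
        (Delta (lu_sig F T x (uint mu nu) (eq_rect _ (lu_car F) a _ e)))
        (upmap (fun s => lu_sig F T x (nu s))
               (lu_sig F S (fun s => ulim x (nu s)) mu a)) = 0).

Definition is_LUmor {X : Space} (F G : LUdata X) (al : forall x, lu_car F x -> lu_car G x)
  : Prop :=
  (forall x a b, lu_d G x (al x a) (al x b) <= lu_d F x a b) /\
  (forall S (x : S -> X) (mu : ultrafilter S) (a : lu_car F (ulim x mu)),
      up_dist mu (fun s => lu_d G (x s))
        (lu_sig G S x mu (al _ a))
        (upmap (fun s => al (x s)) (lu_sig F S x mu a)) = 0).

Definition LU_iso {X : Space} (F G : LUdata X) (al : forall x, lu_car F x -> lu_car G x)
  : Prop :=
  is_LUmor F G al /\
  exists be : forall x, lu_car G x -> lu_car F x,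
    is_LUmor G F be /\ (forall x a, be x (al x a) = a) /\ (forall x b, al x (be x b) = b).

Record BunData (X : Space) := {
  tot : Space;
  proj : tot -> X;
  proj_surj : forall x, exists e, proj e = x;
  bd : tot -> tot -> R  (* global distance, meaningful on E x_X E *) }.
Arguments tot {X}. Arguments proj {X}. Arguments proj_surj {X}. Arguments bd {X}.

Definition fib {X : Space} (E : BunData X) (x : X) : Type := { e : tot E | proj E e = x }.
Definition fdist {X : Space} (E : BunData X) (x : X) (a b : fib E x) : R :=
  bd E (proj1_sig a) (proj1_sig b).

Definition is_Bundle {X : Space} (k : R) (E : BunData X) : Prop :=
  (forall x, is_kmet k (fdist E x)) /\
  (* (1) upper semicontinuity of the distance on E x_X E *)
  (forall e f : tot E, proj E e = proj E f -> forall r, bd E e f < r ->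
     exists U V, opn U /\ opn V /\ U e /\ V f /\
       forall e' f', U e' -> V f' -> proj E e' = proj E f' -> bd E e' f' < r) /\
  tcontinuous (proj E) /\ open_map (proj E) /\
  (* (3) *)
  (forall W : tot E -> Prop, opn W -> forall f, W f ->
     exists V eps, opn V /\ V f /\ 0 < eps /\
       (forall g, V g -> exists h, V h /\ proj E g = proj E h /\ bd E g h < eps) /\
       (forall g, (exists h, V h /\ proj E g = proj E h /\ bd E g h < eps) -> W g)).

Definition over {X : Space} (E E' : BunData X) (psi : tot E -> tot E') : Prop :=
  forall e, proj E' (psi e) = proj E e.

Definition is_Bmor {X : Space} (E E' : BunData X) (psi : tot E -> tot E') : Prop :=
  over E E' psi /\ tcontinuous psi /\
  (forall e f, proj E e = proj E f -> bd E' (psi e) (psi f) <= bd E e f).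

Definition Bun_iso {X : Space} (E E' : BunData X) (psi : tot E -> tot E') : Prop :=
  is_Bmor E E' psi /\
  exists phi : tot E' -> tot E,
    is_Bmor E' E phi /\ (forall e, phi (psi e) = e) /\ (forall e, psi (phi e) = e).

Lemma UP_fib_inh {X : Space} (E : BunData X) (nu : ultrafilter X) : inhabited (UP nu (fib E)).
Proof.
  assert (H : forall x, inhabited (fib E x)).
  { intros x; destruct (proj_surj E x) as [e he]; exact (inhabits (exist _ e he)). }
  destruct (classic (inhabited (UP nu (fib E)))) as [h|h]; [exact h|exfalso].
  apply h. constructor.
  exists (fun x => Some (epsilon (H x) (fun _ => True))).
  apply (uf_up nu (fun _ => True)); [intros; discriminate|apply uf_T].
Qed.

Definition A_W {X : Space} (E : BunData X) (nu : ultrafilter X) (W : tot E -> Prop)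
  (b : UP nu (fib E)) : Prop :=
  exists U, nu U /\ exists eps, 0 < eps /\
    forall y, U y -> exists z, proj1_sig b y = Some z /\
      forall g : fib E y, fdist E y z g < eps -> W (proj1_sig g).

(* sigma_nu(f) for nu on X : limit of the Cauchy filter generated by the A_W *)
Definition sigX {X : Space} (E : BunData X) (nu : ultrafilter X)
  (f : fib E (ulimX nu)) : UP nu (fib E) :=
  epsilon (UP_fib_inh E nu)
    (fun a => forall eps, 0 < eps -> exists W, opn W /\ W (proj1_sig f) /\
        forall b, A_W E nu W b -> up_dist nu (fdist E) a b < eps).

Definition Rsig {X : Space} (E : BunData X) (S : Type) (M : S -> X) (mu : ultrafilter S)
  (f : fib E (ulim M mu)) : UP mu (fun s => fib E (M s)) :=
  let b := sigX E (push M mu) f in exist _ (fun s => proj1_sig b (M s)) (proj2_sig b).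

Definition R_obj {X : Space} (E : BunData X) : LUdata X.
Proof.
  refine {| lu_car := fib E; lu_d := fdist E; lu_sig := Rsig E |}.
  intros x; destruct (proj_surj E x) as [e he]; exact (inhabits (exist _ e he)).
Defined.

Definition R_mor {X : Space} {E E' : BunData X} {psi : tot E -> tot E'}
  (h : over E E' psi) (x : X) (a : fib E x) : fib E' x :=
  exist _ (psi (proj1_sig a)) (eq_trans (h (proj1_sig a)) (proj2_sig a)).

Definition Lcar {X : Space} (F : LUdata X) : Type := { x : X & lu_car F x }.

Definition Ld {X : Space} (F : LUdata X) (g h : Lcar F) : R :=
  match excluded_middle_informative (projT1 g = projT1 h) with
  | left e => lu_d F _ (eq_rect _ (lu_car F) (projT2 g) _ e) (projT2 h)
  | right _ => 0 end.

(* eta -> f : pi eta -> pi f and  coprod_x B(b_x, eps) in eta for all eps,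
   (b_x) representing sigma_{pi eta}(f) (identity family on X) *)
Definition Lconv {X : Space} (F : LUdata X) (eta : ultrafilter (Lcar F)) (f : Lcar F)
  : Prop :=
  conv (push (@projT1 _ _) eta) (projT1 f) /\
  exists e : projT1 f = ulim (fun y : X => y) (push (@projT1 _ _) eta),
    let b := lu_sig F X (fun y => y) (push (@projT1 _ _) eta)
               (eq_rect _ (lu_car F) (projT2 f) _ e) in
    forall eps, 0 < eps ->
      eta (fun g => exists z, proj1_sig b (projT1 g) = Some z /\
                              lu_d F (projT1 g) z (projT2 g) < eps).

Definition Lspace {X : Space} (F : LUdata X) : Space.
Proof.
  refine {| pt := Lcar F;
            opn := fun W => forall f, W f -> forall eta, Lconv F eta f -> eta W |}.
  - intros; apply uf_T.
  - intros A B hA hB f [a b] eta he; apply uf_I; [exact (hA f a eta he)|exact (hB f b eta he)].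
  - intros I G hG f [i hi] eta he.
    apply (uf_up eta (G i)); [intros s hs; exists i; exact hs|].
    apply (hG i f hi eta he).
Defined.

Definition L_obj {X : Space} (F : LUdata X) : BunData X.
Proof.
  refine {| tot := Lspace F; proj := @projT1 _ _; bd := Ld F |}.
  intros x; destruct (lu_ne F x) as [a]; exists (existT _ x a); reflexivity.
Defined.

Definition L_mor {X : Space} {F G : LUdata X} (al : forall x, lu_car F x -> lu_car G x)
  (g : Lcar F) : Lcar G :=
  existT _ (projT1 g) (al (projT1 g) (projT2 g)).

(* Main.v *)
Require Import Defs.
From Stdlib Require Import Reals List Classical ClassicalEpsilon.
Open Scope R_scope.

From Stdlib Require Import ProofIrrelevance FunctionalExtensionality PropExtensionality Lra Arith Lia.
From mathcomp Require classical_sets.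
Open Scope R_scope.

Open Scope R_scope.

Lemma uf_ext {S} (mu nu : ultrafilter S) : (forall A, mu A <-> nu A) -> mu = nu.
Proof.
  destruct mu as [u1 a1 b1 c1 d1 e1], nu as [u2 a2 b2 c2 d2 e2]; simpl; intros H.
  assert (u1 = u2) by (apply functional_extensionality; intro A;
                       apply propositional_extensionality; apply H).
  subst u2. f_equal; apply proof_irrelevance.
Qed.

Lemma uf_mp {S} (mu : ultrafilter S) (A B : S -> Prop) :
  mu A -> (forall s, A s -> B s) -> mu B.
Proof. intros h1 h2; exact (uf_up mu A B h2 h1). Qed.

Lemma uf_and {S} (mu : ultrafilter S) (A B : S -> Prop) :
  mu A -> mu B -> mu (fun s => A s /\ B s).
Proof. apply uf_I. Qed.

Lemma uf_ex {S} (mu : ultrafilter S) (A : S -> Prop) : mu A -> exists s, A s.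
Proof.
  intros h; destruct (classic (exists s, A s)) as [e|n]; [exact e|].
  exfalso; apply (uf_0 mu); apply (uf_mp mu A); [exact h|].
  intros s hs; apply n; exists s; exact hs.
Qed.

Lemma uf_all {S} (mu : ultrafilter S) (A : S -> Prop) : (forall s, A s) -> mu A.
Proof. intros h; apply (uf_mp mu (fun _ => True)); [apply uf_T| intros; apply h]. Qed.

Lemma uf_compl {S} (mu : ultrafilter S) (A : S -> Prop) : ~ mu A -> mu (fun s => ~ A s).
Proof. intros h; destruct (uf_max mu A); [contradiction|assumption]. Qed.

Lemma uf_notboth {S} (mu : ultrafilter S) (A : S -> Prop) : mu A -> mu (fun s => ~ A s) -> False.
Proof.
  intros h1 h2; destruct (uf_ex mu _ (uf_and mu _ _ h1 h2)) as [s [a b]]; auto.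
Qed.

Lemma Rabs_le_inv a K : Rabs a <= K -> - K <= a <= K.
Proof. intros h; pose proof (Rle_abs a); pose proof (Rle_abs (-a)); rewrite Rabs_Ropp in *; lra. Qed.

Definition bnd {S} (f : S -> R) (K : R) := forall s, Rabs (f s) <= K.

Lemma ulimR_exists {S} (mu : ultrafilter S) (f : S -> R) K :
  bnd f K -> exists r, forall eps, 0 < eps -> mu (fun s => Rabs (f s - r) < eps).
Proof.
  intros hb.
  set (E := fun r => mu (fun s => r <= f s)).
  assert (hbd : bound E).
  { exists K; intros r hr; destruct (Rle_or_lt r K) as [h|h]; [exact h|exfalso].
    apply (uf_0 mu); apply (uf_mp mu _ _ hr); intros s hs.
    specialize (hb s); apply Rabs_le_inv in hb; lra. }
  assert (hne : exists x, E x).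
  { exists (-K); apply uf_all; intros s; specialize (hb s); apply Rabs_le_inv in hb; lra. }
  destruct (completeness E hbd hne) as [L [hub hlub]].
  exists L; intros eps heps.
  assert (h1 : exists r, E r /\ L - eps < r).
  { apply NNPP; intros n.
    assert (L <= L - eps); [|lra].
    apply hlub; intros r hr. destruct (Rle_or_lt r (L - eps)) as [h|h]; [exact h|].
    exfalso; apply n; exists r; auto. }
  destruct h1 as [r [hr hlt]].
  assert (h2 : ~ E (L + eps / 2)).
  { intros he; specialize (hub _ he); lra. }
  apply uf_compl in h2.
  apply (uf_mp mu _ _ (uf_and mu _ _ hr h2)); intros s [a b].
  apply Rabs_def1; lra.
Qed.

Lemma ulimR_spec {S} (mu : ultrafilter S) (f : S -> R) K :
  bnd f K -> forall eps, 0 < eps -> mu (fun s => Rabs (f s - ulimR mu f) < eps).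
Proof.
  intros hb. unfold ulimR.
  apply (epsilon_spec (inhabits 0) (fun r => forall eps, 0 < eps -> mu (fun s => Rabs (f s - r) < eps))).
  exact (ulimR_exists mu f K hb).
Qed.

Lemma small_zero (a : R) : (forall eps, 0 < eps -> Rabs a < eps) -> a = 0.
Proof.
  intros h; destruct (Req_dec a 0) as [e|n]; [exact e|exfalso].
  specialize (h (Rabs a)); assert (0 < Rabs a) by (apply Rabs_pos_lt; exact n). lra.
Qed.

Lemma ulimR_unique {S} (mu : ultrafilter S) (f : S -> R) r :
  (forall eps, 0 < eps -> mu (fun s => Rabs (f s - r) < eps)) -> ulimR mu f = r.
Proof.
  intros hr.
  assert (hs : forall eps, 0 < eps -> mu (fun s => Rabs (f s - ulimR mu f) < eps)).
  { unfold ulimR.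
    apply (epsilon_spec (inhabits 0) (fun r => forall eps, 0 < eps -> mu (fun s => Rabs (f s - r) < eps))).
    exists r; exact hr. }
  assert (ulimR mu f - r = 0); [|lra].
  apply small_zero; intros eps heps.
  assert (he2 : 0 < eps / 2) by lra.
  destruct (uf_ex mu _ (uf_and mu _ _ (hr _ he2) (hs _ he2))) as [s [a b]].
  apply Rabs_def2 in a; apply Rabs_def2 in b; apply Rabs_def1; lra.
Qed.

Lemma ulimR_le {S} (mu : ultrafilter S) (f : S -> R) K c :
  bnd f K -> mu (fun s => f s <= c) -> ulimR mu f <= c.
Proof.
  intros hb hc; destruct (Rle_or_lt (ulimR mu f) c) as [h|h]; [exact h|exfalso].
  assert (he : 0 < ulimR mu f - c) by lra.
  destruct (uf_ex mu _ (uf_and mu _ _ hc (ulimR_spec mu f K hb _ he))) as [s [a b]].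
  apply Rabs_def2 in b; lra.
Qed.

Lemma ulimR_ge {S} (mu : ultrafilter S) (f : S -> R) K c :
  bnd f K -> mu (fun s => c <= f s) -> c <= ulimR mu f.
Proof.
  intros hb hc; destruct (Rle_or_lt c (ulimR mu f)) as [h|h]; [exact h|exfalso].
  assert (he : 0 < c - ulimR mu f) by lra.
  destruct (uf_ex mu _ (uf_and mu _ _ hc (ulimR_spec mu f K hb _ he))) as [s [a b]].
  apply Rabs_def2 in b; lra.
Qed.

Lemma ulimR_ae {S} (mu : ultrafilter S) (f g : S -> R) :
  mu (fun s => f s = g s) -> ulimR mu f = ulimR mu g.
Proof.
  intros h; unfold ulimR; f_equal.
  apply functional_extensionality; intro r; apply propositional_extensionality.
  split; intros H eps he; apply (uf_mp mu _ _ (uf_and mu _ _ h (H eps he)));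
    intros s [a b]; [rewrite <- a|rewrite a]; exact b.
Qed.

Lemma ulimR_principal {S} (s0 : S) (f : S -> R) : ulimR (principal s0) f = f s0.
Proof.
  apply ulimR_unique; intros eps he; simpl.
  replace (f s0 - f s0) with 0 by ring; rewrite Rabs_R0; exact he.
Qed.

Lemma ulimR_lt {S} (mu : ultrafilter S) (f : S -> R) K c :
  bnd f K -> ulimR mu f < c -> mu (fun s => f s < c).
Proof.
  intros hb hc.
  assert (he : 0 < c - ulimR mu f) by lra.
  apply (uf_mp mu _ _ (ulimR_spec mu f K hb _ he)); intros s b.
  apply Rabs_def2 in b; lra.
Qed.

Lemma uf_lemma {T} (P : (T -> Prop) -> Prop) :
  (exists A, P A) ->
  (forall A B, P A -> P B -> exists C, P C /\ forall t, C t -> A t /\ B t) ->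
  (forall A, P A -> exists t, A t) ->
  exists u : ultrafilter T, forall A, P A -> u A.
Proof.
  intros hne hint hnon.
  set (isF := fun (Fm : (T -> Prop) -> Prop) =>
    (forall A B, Fm A -> (forall t, A t -> B t) -> Fm B) /\
    (forall A B, Fm A -> Fm B -> Fm (fun t => A t /\ B t)) /\
    (forall A, P A -> Fm A) /\ ~ Fm (fun _ => False)).
  set (Q := fun Fm => (forall A, ~ Fm A) \/ isF Fm).
  destruct (@classical_sets.Zorn_bigcup (T -> Prop) Q) as [A0 [hQ hmax]].
  { intros Fc hsub htot.
    unfold classical_sets.bigcup.
    destruct (classic (exists A Fm, Fc Fm /\ Fm A)) as [[A [Fm [hFm hA]]]|hn].
    2:{ left; intros A [Fm h1 h2]; apply hn; exists A, Fm; auto. }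
    assert (hisF : forall G B, Fc G -> G B -> isF G).
    { intros G B hG hB; destruct (hsub G hG) as [h|h]; [exfalso; exact (h B hB)|exact h]. }
    right; split; [|split; [|split]].
    - intros A1 B1 [G hG hA1] hAB; exists G; [exact hG|].
      exact (proj1 (hisF G A1 hG hA1) A1 B1 hA1 hAB).
    - intros A1 B1 [G1 hG1 hA1] [G2 hG2 hB1].
      destruct (htot G1 G2 hG1 hG2) as [h|h].
      + exists G2; [exact hG2|]. apply (proj1 (proj2 (hisF G2 B1 hG2 hB1))); [apply h; exact hA1|exact hB1].
      + exists G1; [exact hG1|]. apply (proj1 (proj2 (hisF G1 A1 hG1 hA1))); [exact hA1|apply h; exact hB1].
    - intros A1 hA1; exists Fm; [exact hFm|]. exact (proj1 (proj2 (proj2 (hisF Fm A hFm hA)))  A1 hA1).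
    - intros [G hG hF]. exact (proj2 (proj2 (proj2 (hisF G _ hG hF))) hF). }
  set (G := fun A => exists C, P C /\ forall t, C t -> A t).
  assert (hG : isF G).
  { split; [|split; [|split]].
    - intros A B [C [hC h]] hAB; exists C; split; auto.
    - intros A B [C [hC h]] [D [hD h']]; destruct (hint C D hC hD) as [E [hE hE']].
      exists E; split; [exact hE|]; intros t ht; destruct (hE' t ht); auto.
    - intros A hA; exists A; split; auto.
    - intros [C [hC h]]; destruct (hnon C hC) as [t ht]; exact (h t ht). }
  assert (hA0 : isF A0).
  { destruct hQ as [h|h]; [exfalso|exact h].
    apply (hmax G); [|right; exact hG].
    split; [intros A hA; exfalso; exact (h A hA)|].
    intros hs; destruct hne as [A hA]; exact (h A (hs A (proj1 (proj2 (proj2 hG)) A hA))). }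
  destruct hA0 as [hup [hI [hP h0]]].
  assert (hmx : forall B, A0 B \/ A0 (fun s => ~ B s)).
  { intros B; destruct (classic (A0 B)) as [h|h]; [left; exact h|right].
    apply NNPP; intros hnB.
    set (G' := fun C => exists D, A0 D /\ forall t, D t -> B t -> C t).
    apply (hmax G').
    - split.
      + intros C hC; exists C; split; auto.
      + intros hs; apply h; apply hs. exists (fun _ => True); split.
        * destruct hne as [A hA]; apply (hup A); auto.
        * auto.
    - right; split; [|split; [|split]].
      + intros C1 C2 [D [hD hD']] h12; exists D; split; auto.
      + intros C1 C2 [D [hD hD']] [D' [hD2 hD2']]; exists (fun t => D t /\ D' t); split; [apply hI; auto|].
        intros t [a b] hb; split; auto.
      + intros A hA; exists A; split; auto.
      + intros [D [hD hD']]; apply hnB; apply (hup D); [exact hD|]. intros t hDt hBt; exact (hD' t hDt hBt). }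
  assert (hT : A0 (fun _ => True)).
  { destruct hne as [A hA]; apply (hup A); auto. }
  exists {| uf := A0; uf_T := hT; uf_0 := h0;
            uf_up := fun A B hab ha => hup A B ha hab; uf_I := hI; uf_max := hmx |}.
  simpl; exact hP.
Qed.

Lemma open_by_uf (X : Space) (O : X -> Prop) :
  (forall x, O x -> forall nu : ultrafilter X, conv nu x -> nu O) -> opn O.
Proof.
  intros H.
  set (I := {U : X -> Prop | opn U /\ forall y, U y -> O y}).
  assert (hI : opn (fun x => exists i : I, proj1_sig i x)).
  { apply opn_union; intros i; destruct i as [U [hU hh]]; exact hU. }
  assert (heq : (fun x => exists i : I, proj1_sig i x) = O).
  { apply functional_extensionality; intro x; apply propositional_extensionality; split.
    - intros [[U [hU hU']] hx]; exact (hU' x hx).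
    - intros hx; apply NNPP; intros hn.
      set (P := fun A : X -> Prop => exists U, opn U /\ U x /\ A = (fun y => U y /\ ~ O y)).
      destruct (uf_lemma P) as [nu hnu].
      + exists (fun y => True /\ ~ O y); exists (fun _ => True); split; [apply opn_full|split; auto].
      + intros A B [U [hU [hx1 ->]]] [V [hV [hx2 ->]]].
        exists (fun y => (U y /\ V y) /\ ~ O y); split.
        * exists (fun y => U y /\ V y); split; [apply opn_inter; auto|split; auto].
        * intros t [[a b] c]; auto.
      + intros A [U [hU [hxU ->]]]. apply NNPP; intros hne; apply hn.
        exists (exist _ U (conj hU (fun y hy => NNPP _ (fun h => hne (ex_intro _ y (conj hy h)))))).
        exact hxU.
      + assert (hc : conv nu x).
        { intros W hW hWx; apply (uf_mp nu (fun y => W y /\ ~ O y)); [|intros s [a _]; exact a].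
          apply hnu; exists W; auto. }
        specialize (H x hx nu hc).
        apply (uf_notboth nu O H). apply (uf_mp nu (fun y => True /\ ~ O y)); [|intros s [_ b]; exact b].
        apply hnu; exists (fun _ => True); split; [apply opn_full|split; auto]. }
  rewrite <- heq; exact hI.
Qed.

Lemma compact_conv (X : Space) : compact_space X -> forall nu : ultrafilter X, exists x, conv nu x.
Proof.
  intros hc nu; apply NNPP; intros hn.
  set (I := {W : X -> Prop | opn W /\ ~ nu W}).
  destruct (hc I (fun i => proj1_sig i)) as [l hl].
  - intros i; destruct i as [W [hW hh]]; exact hW.
  - intros x; apply NNPP; intros hx; apply hn; exists x.
    intros W hW hWx; apply NNPP; intros hnW; apply hx.
    exists (exist _ W (conj hW hnW)); exact hWx.
  - assert (hu : nu (fun x => exists i, In i l /\ proj1_sig i x)) by (apply uf_all; exact hl).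
    clear hl hn. induction l as [|i l IH].
    + apply (uf_0 nu); apply (uf_mp nu _ _ hu); intros x [i [[] _]].
    + apply IH. destruct (uf_max nu (proj1_sig i)) as [h|h].
      * exfalso; exact (proj2 (proj2_sig i) h).
      * apply (uf_mp nu _ _ (uf_and nu _ _ hu h)); intros x [[j [hj hjx]] hnx].
        destruct hj as [<-|hj]; [contradiction|exists j; auto].
Qed.

Lemma conv_unique (X : Space) : hausdorff_space X ->
  forall (nu : ultrafilter X) x y, conv nu x -> conv nu y -> x = y.
Proof.
  intros hh nu x y hx hy; apply NNPP; intros hn.
  destruct (hh x y hn) as [U [V [hU [hV [hUx [hVy hd]]]]]].
  destruct (uf_ex nu _ (uf_and nu _ _ (hx U hU hUx) (hy V hV hVy))) as [z [a b]].
  exact (hd z a b).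
Qed.

Lemma conv_principal (X : Space) (x : X) : conv (principal x) x.
Proof. intros W _ h; exact h. Qed.

Lemma conv_push_principal {S} (X : Space) (x : S -> X) (s0 : S) : conv (push x (principal s0)) (x s0).
Proof. intros W _ h; exact h. Qed.

Lemma ulimX_spec (X : Space) : compact_space X -> forall nu : ultrafilter X, conv nu (ulimX nu).
Proof.
  intros hc nu; unfold ulimX; apply (epsilon_spec (uf_inhabited nu) (conv nu)).
  apply compact_conv; exact hc.
Qed.

Lemma ulimX_eq (X : Space) : compact_space X -> hausdorff_space X ->
  forall (nu : ultrafilter X) p, conv nu p -> ulimX nu = p.
Proof.
  intros hc hh nu p hp; apply (conv_unique X hh nu); [apply ulimX_spec; exact hc|exact hp].
Qed.

Lemma opn_ext (X : Space) (A B : X -> Prop) : (forall x, A x <-> B x) -> opn A -> opn B.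
Proof.
  intros h hA; replace B with A; [exact hA|].
  apply functional_extensionality; intro x; apply propositional_extensionality; apply h.
Qed.

Lemma le_of_all_gt (u a : R) : (forall r, a < r -> u <= r) -> u <= a.
Proof.
  intros h; destruct (Rle_or_lt u a) as [h1|h1]; [exact h1|].
  specialize (h ((u + a) / 2)); lra.
Qed.

Lemma zero_of_le (u : R) : 0 <= u -> (forall eps, 0 < eps -> u <= eps) -> u = 0.
Proof.
  intros h0 h; destruct (Req_dec u 0) as [e|n]; [exact e|].
  specialize (h (u / 2)); lra.
Qed.

Section UpDist.
Context {S : Type} (mu : ultrafilter S) {M : S -> Type} (D : forall s, M s -> M s -> R) (K : R).
Hypothesis hD : forall s u v, 0 <= D s u v <= K.

Definition updf (a b : UP mu M) (s : S) : R :=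
  match proj1_sig a s, proj1_sig b s with Some u, Some v => D s u v | _, _ => 0 end.



Lemma K_nonneg (s : S) (u : M s) : 0 <= K.
Proof. pose proof (hD s u u); lra. Qed.

Lemma updf_bnd a b : bnd (updf a b) (Rabs K).
Proof.
  intros s; unfold updf; destruct (proj1_sig a s) as [u|], (proj1_sig b s) as [v|];
    try (rewrite Rabs_R0; apply Rabs_pos).
  pose proof (hD s u v). rewrite (Rabs_pos_eq (D s u v)) by lra. pose proof (Rle_abs K); lra.
Qed.

Lemma up_dist_le (a b : UP mu M) eps :
  mu (fun s => forall u v, proj1_sig a s = Some u -> proj1_sig b s = Some v -> D s u v <= eps) ->
  up_dist mu D a b <= eps.
Proof.
  intros h; apply (ulimR_le mu (updf a b) (Rabs K)); [apply updf_bnd|].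
  apply (uf_mp mu _ _ (uf_and mu _ _ h (uf_and mu _ _ (proj2_sig a) (proj2_sig b)))).
  intros s [h1 [h2 h3]]; unfold updf.
  destruct (proj1_sig a s) as [u|]; [|contradiction]; destruct (proj1_sig b s) as [v|]; [|contradiction].
  apply h1; reflexivity.
Qed.

Lemma up_dist_nonneg (a b : UP mu M) : 0 <= up_dist mu D a b.
Proof.
  apply (ulimR_ge mu (updf a b) (Rabs K)); [apply updf_bnd|].
  apply uf_all; intros s; unfold updf.
  destruct (proj1_sig a s) as [u|], (proj1_sig b s) as [v|]; try lra. apply hD.
Qed.

Lemma up_dist_boundK (a b : UP mu M) : up_dist mu D a b <= K.
Proof.
  apply (ulimR_le mu (updf a b) (Rabs K)); [apply updf_bnd|].
  apply (uf_mp mu _ _ (proj2_sig a)); intros s h; unfold updf.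
  destruct (proj1_sig a s) as [u|]; [|contradiction].
  pose proof (K_nonneg s u).
  destruct (proj1_sig b s) as [v|]; [apply hD|lra].
Qed.

Lemma up_dist_lt (a b : UP mu M) eps : up_dist mu D a b < eps ->
  mu (fun s => exists u v, proj1_sig a s = Some u /\ proj1_sig b s = Some v /\ D s u v < eps).
Proof.
  intros h; pose proof (ulimR_lt mu (updf a b) (Rabs K) eps (updf_bnd a b) h) as h'.
  apply (uf_mp mu _ _ (uf_and mu _ _ h' (uf_and mu _ _ (proj2_sig a) (proj2_sig b)))).
  intros s [h1 [h2 h3]]; unfold updf in h1.
  destruct (proj1_sig a s) as [u|]; [|contradiction]; destruct (proj1_sig b s) as [v|]; [|contradiction].
  exists u, v; auto.
Qed.

Lemma up_dist_zero (a b : UP mu M) :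
  (forall eps, 0 < eps -> mu (fun s => forall u v, proj1_sig a s = Some u -> proj1_sig b s = Some v -> D s u v <= eps)) ->
  up_dist mu D a b = 0.
Proof.
  intros h; apply zero_of_le; [apply up_dist_nonneg|]. intros eps he; apply up_dist_le; auto.
Qed.

End UpDist.

Open Scope R_scope.

Lemma fib_ext {X : Space} (E : BunData X) y (u v : fib E y) : proj1_sig u = proj1_sig v -> u = v.
Proof.
  destruct u as [u hu], v as [v hv]; simpl; intros ->; f_equal; apply proof_irrelevance.
Qed.

Lemma fib_cast {X : Space} (E : BunData X) y z (e : y = z) (a : fib E y) :
  proj1_sig (eq_rect _ (fib E) a _ e) = proj1_sig a.
Proof. destruct e; reflexivity. Qed.

Lemma fibp {X : Space} {E : BunData X} {y} (z : fib E y) : proj E (proj1_sig z) = y.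
Proof. exact (proj2_sig z). Qed.

Section BundleSide.
Variable X : Space.
Hypothesis hcpt : compact_space X.
Hypothesis hhd : hausdorff_space X.
Variable k : R.
Variable E : BunData X.
Hypothesis hE : is_Bundle k E.

Let hmet := proj1 hE.
Let husc := proj1 (proj2 hE).
Let hpcont := proj1 (proj2 (proj2 hE)).
Let hpopen := proj1 (proj2 (proj2 (proj2 hE))).
Let h3 := proj2 (proj2 (proj2 (proj2 hE))).

Lemma fdist_bd y (u v : fib E y) : 0 <= fdist E y u v <= k.
Proof. apply (proj1 (hmet y)). Qed.

Lemma bd_pos (e f : tot E) : proj E e = proj E f -> 0 <= bd E e f <= k.
Proof. intros h; exact (fdist_bd (proj E f) (exist _ e h) (exist _ f eq_refl)). Qed.

Lemma bd_refl (e : tot E) : bd E e e = 0.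
Proof.
  exact (proj2 (proj1 (proj2 (hmet (proj E e))) (exist _ e eq_refl) (exist _ e eq_refl)) eq_refl).
Qed.

Lemma bd_sym (e f : tot E) : proj E e = proj E f -> bd E e f = bd E f e.
Proof.
  intros h; exact (proj1 (proj2 (proj2 (hmet (proj E f)))) (exist _ e h) (exist _ f eq_refl)).
Qed.

Lemma bd_tri (e f g : tot E) : proj E e = proj E f -> proj E f = proj E g ->
  bd E e g <= bd E e f + bd E f g.
Proof.
  intros h1 h2.
  exact (proj1 (proj2 (proj2 (proj2 (hmet (proj E g))))) (exist _ e (eq_trans h1 h2)) (exist _ f h2) (exist _ g eq_refl)).
Qed.

Lemma bd_zero (e f : tot E) : proj E e = proj E f -> bd E e f = 0 -> e = f.
Proof.
  intros h h0.
  pose proof (proj1 (proj1 (proj2 (hmet (proj E f))) (exist _ e h) (exist _ f eq_refl)) h0) as hh.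
  exact (f_equal (@proj1_sig _ _) hh).
Qed.

Definition Pspec (nu : ultrafilter X) (f : fib E (ulimX nu)) (a : UP nu (fib E)) : Prop :=
  forall eps, 0 < eps -> exists W, opn W /\ W (proj1_sig f) /\
        forall b, A_W E nu W b -> up_dist nu (fdist E) a b < eps.

Lemma inv_small (n : nat) : 0 < / INR (S n).
Proof. apply Rinv_0_lt_compat; apply lt_0_INR; lia. Qed.

Lemma inv_mono (m n : nat) : (n <= m)%nat -> / INR (S m) <= / INR (S n).
Proof.
  intros h; apply Rinv_le_contravar; [apply lt_0_INR; lia|apply le_INR; lia].
Qed.

Lemma small_inv eps : 0 < eps -> exists n, / INR (S n) < eps.
Proof.
  intros he; destruct (archimed_cor1 eps he) as [N [h1 h2]].
  exists N; eapply Rle_lt_trans; [|exact h1]; apply Rinv_le_contravar; [apply lt_0_INR; lia|apply le_INR; lia].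
Qed.

Lemma sigX_exists (nu : ultrafilter X) (f : fib E (ulimX nu)) : exists a, Pspec nu f a.
Proof.
  set (x := ulimX nu).
  assert (hx : conv nu x) by (apply ulimX_spec; exact hcpt).
  set (f0 := proj1_sig f).
  assert (hf0 : proj E f0 = x) by exact (proj2_sig f).
  set (Hprop := fun (n : nat) (H : tot E -> Prop) => opn H /\ H f0 /\
         forall e g, H e -> H g -> proj E e = proj E g -> bd E e g < / INR (S n)).
  assert (hHex : forall n, exists H, Hprop n H).
  { intros n. destruct (husc f0 f0 eq_refl (/ INR (S n))) as [U [V [hU [hV [hUf [hVf hUV]]]]]].
    { rewrite bd_refl; apply inv_small. }
    exists (fun e => U e /\ V e); split; [apply opn_inter; auto|split; [auto|]].
    intros e g [a _] [_ b] h; apply hUV; auto. }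
  set (Hs := fun n => epsilon (inhabits (fun _ : tot E => True)) (Hprop n)).
  assert (hHs : forall n, Hprop n (Hs n)) by (intros n; apply epsilon_spec; apply hHex).
  set (G := fun n e => forall m, (m <= n)%nat -> Hs m e).
  assert (hGopn : forall n, opn (G n)).
  { induction n as [|n IH].
    - apply (opn_ext _ (Hs 0%nat)); [|apply (hHs 0%nat)].
      intros e; split; [intros h m hm; replace m with 0%nat by lia; exact h|intros h; apply h; lia].
    - apply (opn_ext _ (fun e => G n e /\ Hs (S n) e)); [|apply opn_inter; [exact IH|apply (hHs (S n))]].
      intros e; split.
      + intros [h1 h2] m hm; destruct (Nat.eq_dec m (S n)) as [->|hne]; [exact h2|apply h1; lia].
      + intros h; split; [intros m hm; apply h; lia|apply h; lia]. }
  assert (hGf : forall n, G n f0) by (intros n m _; apply (hHs m)).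
  assert (hGmono : forall m n e, (n <= m)%nat -> G m e -> G n e) by (intros m n e hnm h j hj; apply h; lia).
  assert (hGdiam : forall n e g, G n e -> G n g -> proj E e = proj E g -> bd E e g < / INR (S n)).
  { intros n e g he hg hp; apply (proj2 (proj2 (hHs n))); [apply he|apply hg|exact hp]; lia. }
  set (P := fun n y => exists h, G n h /\ proj E h = y).
  assert (hPmono : forall m n y, (n <= m)%nat -> P m y -> P n y).
  { intros m n y hnm [h [hh hp]]; exists h; split; [apply (hGmono m); auto|auto]. }
  assert (hPnu : forall n, nu (P n)).
  { intros n; apply hx; [apply hpopen; apply hGopn|exists f0; split; [apply hGf|exact hf0]]. }
  set (hh := fun n y => epsilon (inhabits f0) (fun h => G n h /\ proj E h = y)).
  assert (hhs : forall n y, P n y -> G n (hh n y) /\ proj E (hh n y) = y).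
  { intros n y hp; apply epsilon_spec; exact hp. }
  assert (hstar : forall y, P 0%nat y -> ~ (forall n, P n y) -> exists n, P n y /\ ~ P (S n) y).
  { intros y h0 hn. apply NNPP; intros hno. apply hn. intros n; induction n as [|n IH]; [exact h0|].
    apply NNPP; intros hs; apply hno; exists n; auto. }
  set (nstar := fun y => epsilon (inhabits 0%nat) (fun n => P n y /\ ~ P (S n) y)).
  assert (hnstar : forall y, P 0%nat y -> ~ (forall n, P n y) -> P (nstar y) y /\ ~ P (S (nstar y)) y).
  { intros y h0 hn; apply epsilon_spec; apply hstar; auto. }
  set (good := fun (y : X) (z : fib E y) => forall n g, G n g -> proj E g = y -> P n y ->
                   bd E (proj1_sig z) g <= / INR (S n)).
  assert (hgood : forall y, P 0%nat y -> exists z : fib E y, good y z).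
  { intros y h0. destruct (classic (forall n, P n y)) as [hall|hn].
    - set (u := fun m => exist (fun e => proj E e = y) (hh m y) (proj2 (hhs m y (hall m)))).
      assert (hu : forall m, G m (proj1_sig (u m))) by (intros m; exact (proj1 (hhs m y (hall m)))).
      assert (hcau : forall eps, 0 < eps -> exists N, forall m n, (N <= m)%nat -> (N <= n)%nat -> fdist E y (u m) (u n) < eps).
      { intros eps he; destruct (small_inv eps he) as [N hN]; exists N; intros m n hm hn'.
        unfold fdist. eapply Rlt_le_trans; [|apply Rlt_le; exact hN].
        apply hGdiam; [apply (hGmono m); auto|apply (hGmono n); auto|].
        rewrite (fibp (u m)), (fibp (u n)); reflexivity. }
      destruct (proj2 (proj2 (proj2 (proj2 (hmet y)))) u hcau) as [l hl].
      exists l; intros n g hg hgy _.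
      apply le_of_all_gt; intros r hr.
      destruct (hl (r - / INR (S n))) as [N hN]; [lra|].
      set (m := Nat.max N n).
      assert (h1 : fdist E y (u m) l < r - / INR (S n)) by (apply hN; lia).
      assert (h2 : bd E (proj1_sig (u m)) g < / INR (S n)).
      { apply hGdiam; [apply (hGmono m); [lia|apply hu]|exact hg|].
        rewrite (fibp (u m)); auto. }
      unfold fdist in h1.
      assert (hp1 : proj E (proj1_sig l) = proj E (proj1_sig (u m))) by (rewrite (fibp l), (fibp (u m)); reflexivity).
      assert (hp2 : proj E (proj1_sig (u m)) = proj E g) by (rewrite (fibp (u m)); auto).
      pose proof (bd_tri _ _ _ hp1 hp2) as ht. rewrite (bd_sym _ _ hp1) in ht. lra.
    - destruct (hnstar y h0 hn) as [hp hnp].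
      exists (exist (fun e => proj E e = y) (hh (nstar y) y) (proj2 (hhs _ y hp))).
      intros n g hg hgy hpn; simpl.
      assert (hle : (n <= nstar y)%nat).
      { destruct (le_lt_dec n (nstar y)) as [h|h]; [exact h|exfalso; apply hnp; apply (hPmono n); [lia|exact hpn]]. }
      apply Rlt_le; apply hGdiam; [apply (hGmono (nstar y)); [exact hle|apply (hhs _ y hp)]|exact hg|].
      rewrite (proj2 (hhs _ y hp)); auto. }
  set (bval := fun y => match excluded_middle_informative (P 0%nat y) with
                        | left h0 => Some (proj1_sig (constructive_indefinite_description _ (hgood y h0)))
                        | right _ => None end).
  assert (hbUP : nu (fun y => bval y <> None)).
  { apply (uf_mp nu _ _ (hPnu 0%nat)); intros y h; unfold bval.
    destruct (excluded_middle_informative (P 0%nat y)); [discriminate|contradiction]. }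
  exists (exist _ bval hbUP).
  intros eps he. destruct (small_inv (eps / 2)) as [n hn]; [lra|].
  exists (G n); split; [apply hGopn|split; [apply hGf|]].
  intros b [U [hU [eps' [he' hUb]]]].
  apply Rle_lt_trans with (/ INR (S n)); [|lra].
  apply (up_dist_le nu (fdist E) k fdist_bd).
  apply (uf_mp nu _ _ (uf_and nu _ _ hU (hPnu n))). intros y [hyU hyP] u v hu hv.
  destruct (hUb y hyU) as [z [hz hzW]].
  rewrite hz in hv; injection hv as <-.
  simpl in hu; unfold bval in hu.
  destruct (excluded_middle_informative (P 0%nat y)) as [h0|h0]; [|discriminate].
  injection hu as <-.
  destruct (constructive_indefinite_description _ (hgood y h0)) as [w hw]; simpl.
  unfold fdist; apply hw; [|apply (proj2_sig z)|exact hyP].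
  apply hzW. unfold fdist; rewrite bd_refl; exact he'.
Qed.

Lemma sigX_spec (nu : ultrafilter X) (f : fib E (ulimX nu)) : Pspec nu f (sigX E nu f).
Proof.
  unfold sigX. apply (epsilon_spec (UP_fib_inh E nu) (Pspec nu f)). apply sigX_exists.
Qed.

Lemma sigX_land (nu : ultrafilter X) (f : fib E (ulimX nu)) (W : tot E -> Prop) :
  opn W -> W (proj1_sig f) ->
  nu (fun y => exists z, proj1_sig (sigX E nu f) y = Some z /\ W (proj1_sig z)).
Proof.
  intros hW hWf.
  assert (hx : conv nu (ulimX nu)) by (apply ulimX_spec; exact hcpt).
  destruct (h3 W hW _ hWf) as [V [dl [hV [hVf [hdl [_ hVW]]]]]].
  destruct (sigX_spec nu f dl hdl) as [W1 [hW1 [hW1f hA]]].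
  destruct (h3 (fun e => W1 e /\ V e)) with (f := proj1_sig f) as [V2 [dl2 [hV2 [hV2f [hdl2 [_ hV2W]]]]]];
    [apply opn_inter; auto|split; auto|].
  assert (hV2sub : forall e, V2 e -> W1 e /\ V e).
  { intros e he; apply hV2W; exists e; split; [auto|split; [auto|rewrite bd_refl; exact hdl2]]. }
  set (Q := fun y => exists h, V2 h /\ proj E h = y).
  set (bval := fun y => match excluded_middle_informative (Q y) with
                 | left H => let (h, hp) := constructive_indefinite_description _ H in
                             Some (exist (fun e => proj E e = y) h (proj2 hp))
                 | right _ => None end).
  assert (hQ : nu Q).
  { apply hx; [apply hpopen; exact hV2|exists (proj1_sig f); split; [auto|exact (proj2_sig f)]]. }
  assert (hbUP : nu (fun y => bval y <> None)).
  { apply (uf_mp nu _ _ hQ); intros y h; unfold bval.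
    destruct (excluded_middle_informative (Q y)); [|contradiction].
    destruct (constructive_indefinite_description _ _); discriminate. }
  set (b := exist _ bval hbUP : UP nu (fib E)).
  assert (hbval : forall y, Q y -> exists z, bval y = Some z /\ V2 (proj1_sig z)).
  { intros y hy; unfold bval; destruct (excluded_middle_informative (Q y)); [|contradiction].
    destruct (constructive_indefinite_description _ _) as [h [hh hp]]; eexists; split; [reflexivity|exact hh]. }
  assert (hbA : A_W E nu W1 b).
  { exists Q; split; [exact hQ|]. exists dl2; split; [exact hdl2|].
    intros y hy; destruct (hbval y hy) as [z [hz hzV]]; exists z; split; [exact hz|].
    intros g hg.
    assert (hpz : proj E (proj1_sig g) = proj E (proj1_sig z)) by (rewrite (fibp g), (fibp z); reflexivity).
    apply (proj1 (hV2W (proj1_sig g) (ex_intro _ (proj1_sig z) (conj hzV (conj hpz (eq_ind _ (fun r => r < dl2) hg _ (bd_sym _ _ (eq_sym hpz)))))))). }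
  pose proof (up_dist_lt nu (fdist E) k fdist_bd _ _ _ (hA b hbA)) as hlt.
  apply (uf_mp nu _ _ (uf_and nu _ _ hlt hQ)). intros y [[u [v [hu [hv hd]]]] hy].
  exists u; split; [exact hu|]. apply hVW. exists (proj1_sig v).
  destruct (hbval y hy) as [z [hz hzV]]. simpl in hv; rewrite hv in hz; injection hz as hzv; subst z.
  split; [exact (proj2 (hV2sub _ hzV))|split; [rewrite (fibp u), (fibp v); reflexivity|exact hd]].
Qed.

Lemma sigX_land_push {S} (M : S -> X) (mu : ultrafilter S) (f : fib E (ulim M mu)) (W : tot E -> Prop) :
  opn W -> W (proj1_sig f) ->
  mu (fun s => exists z, proj1_sig (Rsig E S M mu f) s = Some z /\ W (proj1_sig z)).
Proof. intros hW hWf; exact (sigX_land (push M mu) f W hW hWf). Qed.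

Lemma R_LeftUlt : is_LeftUlt k (R_obj E).
Proof.
  split; [exact hmet|split; [|split]].
  -
    intros S x mu a b; simpl.
    apply le_of_all_gt; intros r hr.
    destruct (husc (proj1_sig a) (proj1_sig b)) with (r := r) as [U [V [hU [hV [hUa [hVb hUV]]]]]];
      [rewrite (fibp a), (fibp b); reflexivity|exact hr|].
    apply (up_dist_le mu (fun s => fdist E (x s)) k (fun s => fdist_bd (x s))).
    apply (uf_mp mu _ _ (uf_and mu _ _ (sigX_land_push x mu a U hU hUa) (sigX_land_push x mu b V hV hVb))).
    intros s [[z [hz hzU]] [w [hw hwV]]] u v hu hv.
    rewrite hz in hu; injection hu as <-. rewrite hw in hv; injection hv as <-.
    apply Rlt_le; apply hUV; auto. rewrite (fibp z), (fibp w); reflexivity.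
  -
    intros S x s0 e a; simpl.
    change (proj1_sig (sigX E (push x (principal s0)) a) (x s0) = Some (eq_rect _ (fib E) a _ e)).
    set (b := sigX E (push x (principal s0)) a).
    assert (hb : proj1_sig b (x s0) <> None) by exact (proj2_sig b).
    destruct (proj1_sig b (x s0)) as [z|] eqn:Hz; [|contradiction].
    f_equal. apply fib_ext. rewrite fib_cast.
    apply bd_zero; [rewrite (fibp z), (fibp a); symmetry; exact e|].
    apply zero_of_le; [apply bd_pos; rewrite (fibp z), (fibp a); symmetry; exact e|].
    intros r hr.
    destruct (husc (proj1_sig a) (proj1_sig a)) with (r := r) as [U [V [hU [hV [hUa [hVb hUV]]]]]];
      [reflexivity|rewrite bd_refl; exact hr|].
    pose proof (sigX_land (push x (principal s0)) a (fun e => U e /\ V e) (opn_inter _ _ _ hU hV) (conj hUa hVb)) as hl.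
    destruct hl as [z' [hz' [hU' _]]]. change (proj1_sig b (x s0) = Some z') in hz'. rewrite Hz in hz'; injection hz' as <-.
    apply Rlt_le; apply hUV; auto. rewrite (fibp z), (fibp a); symmetry; exact e.
  -
    intros S T mu nu x e a; simpl.
    apply (up_dist_zero mu _ k).
    { intros s u v; split; [apply (up_dist_nonneg _ _ k (fun t => fdist_bd (x t)))|apply (up_dist_boundK _ _ k (fun t => fdist_bd (x t)))]. }
    intros eps he.
    destruct (husc (proj1_sig a) (proj1_sig a)) with (r := eps) as [U [V [hU [hV [hUa [hVb hUV]]]]]];
      [reflexivity|rewrite bd_refl; exact he|].
    set (a' := eq_rect _ (fib E) a _ e).
    assert (ha' : proj1_sig a' = proj1_sig a) by apply fib_cast.
    pose proof (sigX_land_push x (uint mu nu) a' U hU) as h1. rewrite ha' in h1; specialize (h1 hUa).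
    pose proof (sigX_land_push (fun s => ulim x (nu s)) mu a V hV hVb) as h2.
    simpl in h1.
    apply (uf_mp mu _ _ (uf_and mu _ _ h1 h2)). intros s [hs1 [w [hw hwV]]] u v hu hv.
    assert (hu' : proj1_sig u = proj1_sig (Rsig E T x (uint mu nu) a')).
    { revert hu; unfold Delta; simpl.
      destruct (excluded_middle_informative _) as [h|h]; [intros hh; injection hh as <-; reflexivity|discriminate]. }
    simpl in hv. simpl in hw. rewrite hw in hv. simpl in hv. injection hv as <-.
    apply (up_dist_le (nu s) (fun t => fdist E (x t)) k (fun t => fdist_bd (x t))).
    apply (uf_mp (nu s) _ _ (uf_and (nu s) _ _ hs1 (sigX_land_push x (nu s) w V hV hwV))).
    intros t [[z [hz hzU]] [z' [hz' hz'V]]] u1 v1 hu1 hv1.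
    rewrite hu' in hu1. simpl in hu1. rewrite hz in hu1; injection hu1 as <-.
    rewrite hz' in hv1; injection hv1 as <-.
    apply Rlt_le; apply hUV; auto. rewrite (fibp z), (fibp z'); reflexivity.
Qed.

End BundleSide.

Open Scope R_scope.

Lemma R_mor_LUmor (X : Space) (hc : compact_space X) (k : R) (E E' : BunData X)
  (psi : tot E -> tot E') (h : over E E' psi) :
  is_Bundle k E -> is_Bundle k E' -> is_Bmor E E' psi ->
  is_LUmor (R_obj E) (R_obj E') (R_mor h).
Proof.
  intros hE hE' [_ [hpc hpl]]. split.
  - intros x a b; simpl; unfold fdist, R_mor; simpl. apply hpl. rewrite (fibp a), (fibp b); reflexivity.
  - intros S x mu a.
    change (up_dist mu (fun s => fdist E' (x s)) (Rsig E' S x mu (R_mor h _ a)) (upmap (fun s => R_mor h (x s)) (Rsig E S x mu a)) = 0).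
    apply (up_dist_zero mu _ k (fun s => fdist_bd X k E' hE' (x s))).
    intros eps he.
    destruct (proj1 (proj2 hE') (psi (proj1_sig a)) (psi (proj1_sig a)) eq_refl eps) as [U [V [hU [hV [hUa [hVa hUV]]]]]].
    { rewrite bd_refl with (k := k); auto. }
    pose proof (sigX_land_push X hc k E' hE' x mu (R_mor h _ a) U hU hUa) as h1.
    pose proof (sigX_land_push X hc k E hE x mu a (fun e => V (psi e)) (hpc V hV) hVa) as h2.
    apply (uf_mp mu _ _ (uf_and mu _ _ h1 h2)). intros s [[z [hz hzU]] [w [hw hwV]]] u v hu hv.
    pose proof (eq_trans (eq_sym hz) hu) as hu2; injection hu2 as <-.
    pose proof (eq_trans (f_equal (option_map (R_mor h (x s))) (eq_sym hw)) hv) as hv2.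
    simpl in hv2; injection hv2 as <-.
    apply Rlt_le; apply hUV; [exact hzU|exact hwV|].
    unfold R_mor; simpl. rewrite h, (fibp z), (fibp w); reflexivity.
Qed.

Lemma R_mor_id (X : Space) (E : BunData X) (h : over E E (fun e => e)) x (a : fib E x) :
  R_mor h x a = a.
Proof. apply fib_ext; reflexivity. Qed.

Lemma R_mor_comp (X : Space) (E E' E'' : BunData X) (psi : tot E -> tot E') (psi' : tot E' -> tot E'')
  (h : over E E' psi) (h' : over E' E'' psi') (h'' : over E E'' (fun e => psi' (psi e))) x (a : fib E x) :
  R_mor h'' x a = R_mor h' x (R_mor h x a).
Proof. apply fib_ext; reflexivity. Qed.


(* Barr-type theorem: a convergence relation satisfying the principal and the
   diagonal axioms is the convergence of the topology it generates. *)
Section Barr.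
Context {T : Type} (cv : ultrafilter T -> T -> Prop).
Hypothesis ha : forall t, cv (principal t) t.
Hypothesis hb : forall (S : Type) (z : ultrafilter S) (th : S -> ultrafilter T) (g : S -> T) (h : T),
    (forall s, cv (th s) (g s)) -> cv (push g z) h -> cv (uint z th) h.

Definition opn_cv (W : T -> Prop) := forall f, W f -> forall eta, cv eta f -> eta W.

Definition clcv (C : T -> Prop) (h : T) := exists xi : ultrafilter T, xi C /\ cv xi h.

Lemma push_id_eq (eta : ultrafilter T) : push (fun t => t) eta = eta.
Proof. apply uf_ext; intros A; simpl; tauto. Qed.

Lemma clcv_open (C : T -> Prop) : opn_cv (fun h => ~ clcv C h).
Proof.
  intros h hh eta hc. apply NNPP; intros hn.
  assert (hcl : eta (clcv C)).
  { destruct (uf_max eta (fun h => ~ clcv C h)) as [x|x]; [contradiction|].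
    apply (uf_mp eta _ _ x); intros t ht; apply NNPP; exact ht. }
  set (th := fun g => match excluded_middle_informative (clcv C g) with
                      | left H => proj1_sig (constructive_indefinite_description _ H)
                      | right _ => principal g end).
  assert (hth : forall g, cv (th g) g).
  { intros g; unfold th; destruct (excluded_middle_informative (clcv C g)) as [H|H]; [|apply ha].
    destruct (constructive_indefinite_description _ H) as [xi [hx0 hx]]; exact hx. }
  assert (hpush : cv (push (fun t => t) eta) h) by (rewrite push_id_eq; exact hc).
  pose proof (hb T eta th (fun t => t) h hth hpush) as hu.
  apply hh. exists (uint eta th); split; [|exact hu].
  simpl. apply (uf_mp eta _ _ hcl); intros g hg; unfold th.
  destruct (excluded_middle_informative (clcv C g)) as [H|H]; [|contradiction].
  destruct (constructive_indefinite_description _ H) as [xi [hx hx0]]; exact hx.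
Qed.

Lemma barr (eta : ultrafilter T) (f : T) :
  (forall W, opn_cv W -> W f -> eta W) -> cv eta f.
Proof.
  intros H; apply NNPP; intros hn.
  assert (hC : exists C, eta C /\ ~ clcv C f).
  { apply NNPP; intros hno.
    assert (hall : forall C, eta C -> clcv C f).
    { intros C hC; apply NNPP; intros h; apply hno; exists C; auto. }
    set (I := {C : T -> Prop | eta C}).
    destruct (uf_lemma (fun A : I -> Prop => exists D, eta D /\ A = (fun c => forall t, proj1_sig c t -> D t)))
      as [z hz].
    - exists (fun c : I => forall t, proj1_sig c t -> True); exists (fun _ => True); split; [apply uf_T|reflexivity].
    - intros A B [D [hD ->]] [D' [hD' ->]].
      exists (fun c : I => forall t, proj1_sig c t -> D t /\ D' t); split.
      + exists (fun t => D t /\ D' t); split; [apply uf_and; auto|reflexivity].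
      + intros c hc; split; intros t ht; apply (hc t ht).
    - intros A [D [hD ->]]. exists (exist _ D hD); simpl; auto.
    - set (th := fun c : I => proj1_sig (constructive_indefinite_description _ (hall (proj1_sig c) (proj2_sig c)))).
      assert (hth1 : forall c, th c (proj1_sig c)).
      { intros c; unfold th; destruct (constructive_indefinite_description _ _) as [xi [h1 h2]]; exact h1. }
      assert (hth2 : forall c, cv (th c) f).
      { intros c; unfold th; destruct (constructive_indefinite_description _ _) as [xi [h1 h2]]; exact h2. }
      assert (hp : cv (push (fun _ => f) z) f).
      { replace (push (fun _ => f) z) with (principal f); [apply ha|].
        apply uf_ext; intros A; simpl; split.
        - intros hA; apply uf_all; auto.
        - intros hA; apply NNPP; intros hnA; apply (uf_0 z); apply (uf_mp z _ _ hA); auto. }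
      pose proof (hb I z th (fun _ => f) f hth2 hp) as hu.
      apply hn. replace eta with (uint z th); [exact hu|].
      apply uf_ext; intros A; split.
      + intros hA; apply NNPP; intros hnA.
        assert (hc : eta (fun t => ~ A t)) by (apply uf_compl; exact hnA).
        assert (hz2 : z (fun c => forall t, proj1_sig c t -> ~ A t)) by (apply hz; exists (fun t => ~ A t); auto).
        apply (uf_0 z). apply (uf_mp z _ _ (uf_and z _ _ hA hz2)). intros c [h1 h2].
        apply (uf_notboth (th c) A h1). apply (uf_mp (th c) _ _ (hth1 c)). exact h2.
      + intros hA. simpl. assert (hz2 : z (fun c => forall t, proj1_sig c t -> A t)) by (apply hz; exists A; auto).
        apply (uf_mp z _ _ hz2). intros c hc. apply (uf_mp (th c) _ _ (hth1 c)). exact hc. }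
  destruct hC as [C [hC hnC]].
  pose proof (H _ (clcv_open C) hnC) as hW.
  apply (uf_notboth eta (clcv C)); [|exact hW].
  apply (uf_mp eta _ _ hC); intros t ht; exists (principal t); split; [exact ht|apply ha].
Qed.

End Barr.

Open Scope R_scope.

Lemma Delta_val {S T : Type} {mu : ultrafilter S} {nu : S -> ultrafilter T} {M : T -> Type}
  (a : UP (uint mu nu) M) s u : proj1_sig (Defs.Delta a) s = Some u -> proj1_sig u = proj1_sig a.
Proof.
  unfold Defs.Delta; simpl. destruct (excluded_middle_informative _) as [h|h]; [|discriminate].
  intros hh; injection hh as <-; reflexivity.
Qed.

Definition cst {X : Space} (F : LUdata X) {x y : X} (e : x = y) (a : lu_car F x) : lu_car F y :=
  eq_rect x (lu_car F) a y e.

Definition sg {X : Space} (F : LUdata X) {S} (x : S -> X) (mu : ultrafilter S) (p : X)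
  (e : p = ulim x mu) (a : lu_car F p) : UP mu (fun s => lu_car F (x s)) :=
  lu_sig F S x mu (cst F e a).

Lemma cst_irr {X : Space} (F : LUdata X) {x y : X} (e1 e2 : x = y) a : cst F e1 a = cst F e2 a.
Proof. rewrite (proof_irrelevance _ e1 e2); reflexivity. Qed.

Lemma cst_self {X : Space} (F : LUdata X) {x : X} (e : x = x) a : cst F e a = a.
Proof. rewrite (proof_irrelevance _ e eq_refl); reflexivity. Qed.

Lemma sg_irr {X : Space} (F : LUdata X) {S} (x : S -> X) mu p (e1 e2 : p = ulim x mu) a :
  sg F x mu p e1 a = sg F x mu p e2 a.
Proof. unfold sg; rewrite (cst_irr F e1 e2); reflexivity. Qed.

Lemma ulim_id {X : Space} (hc : compact_space X) (hh : hausdorff_space X) (nu : ultrafilter X) p :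
  conv nu p -> p = ulim (fun y => y) nu.
Proof. intros h; symmetry; apply (ulimX_eq X hc hh (push (fun y => y) nu) p); exact h. Qed.

Lemma ulim_principal {X : Space} (hc : compact_space X) (hh : hausdorff_space X) {S} (x : S -> X) s0 :
  x s0 = ulim x (principal s0).
Proof. symmetry; apply (ulimX_eq X hc hh); apply conv_push_principal. Qed.

Section LSide.
Variable X : Space.
Hypothesis hcpt : compact_space X.
Hypothesis hhd : hausdorff_space X.
Variable k : R.
Variable F : LUdata X.
Hypothesis hF : is_LeftUlt k F.

Let dF := lu_d F.

Lemma dF_bd x (a b : lu_car F x) : 0 <= lu_d F x a b <= k.
Proof. apply (proj1 (proj1 hF x)). Qed.
Lemma dF_refl x (a : lu_car F x) : lu_d F x a a = 0.
Proof. apply (proj1 (proj2 (proj1 hF x))); reflexivity. Qed.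
Lemma dF_zero x (a b : lu_car F x) : lu_d F x a b = 0 -> a = b.
Proof. apply (proj1 (proj2 (proj1 hF x))). Qed.
Lemma dF_sym x (a b : lu_car F x) : lu_d F x a b = lu_d F x b a.
Proof. apply (proj1 (proj2 (proj2 (proj1 hF x)))). Qed.
Lemma dF_tri x (a b c : lu_car F x) : lu_d F x a c <= lu_d F x a b + lu_d F x b c.
Proof. apply (proj1 (proj2 (proj2 (proj2 (proj1 hF x))))). Qed.

Lemma sg_Lip {S} (x : S -> X) mu p (e : p = ulim x mu) a b :
  up_dist mu (fun s => lu_d F (x s)) (sg F x mu p e a) (sg F x mu p e b) <= lu_d F p a b.
Proof. subst p; apply (proj1 (proj2 hF)). Qed.

Lemma sg_i {S} (x : S -> X) s0 p (e : p = ulim x (principal s0)) (e' : p = x s0) a :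
  proj1_sig (sg F x (principal s0) p e a) s0 = Some (cst F e' a).
Proof.
  subst p. exact (proj1 (proj2 (proj2 hF)) S x s0 e' a).
Qed.

Lemma updist_bdF {T} (nu : ultrafilter T) (x : T -> X) (u v : UP nu (fun t => lu_car F (x t))) :
  0 <= up_dist nu (fun t => lu_d F (x t)) u v <= k.
Proof.
  split; [apply (up_dist_nonneg _ _ k (fun t => dF_bd (x t)))|apply (up_dist_boundK _ _ k (fun t => dF_bd (x t)))].
Qed.

Lemma sg_ii_ev {S T} (mu : ultrafilter S) (nu : S -> ultrafilter T) (x : T -> X)
  (ys : S -> X) (hy : forall s, ys s = ulim x (nu s))
  (rho : ultrafilter T) (hrho : forall A, rho A <-> mu (fun s => nu s A))
  (p : X) (e1 : p = ulim ys mu) (e2 : p = ulim x rho) (a : lu_car F p) (eps : R) :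
  0 < eps ->
  mu (fun s => exists w, proj1_sig (sg F ys mu p e1 a) s = Some w /\
     nu s (fun t => exists u v, proj1_sig (sg F x rho p e2 a) t = Some u /\
          proj1_sig (sg F x (nu s) (ys s) (hy s) w) t = Some v /\ lu_d F (x t) u v < eps)).
Proof.
  intros he.
  assert (hr : rho = uint mu nu) by (apply uf_ext; exact hrho). subst rho.
  assert (hys : ys = fun s => ulim x (nu s)) by (apply functional_extensionality; exact hy).
  subst ys. subst p.
  pose proof (proj2 (proj2 (proj2 hF)) S T mu nu x e2 a) as hii.
  assert (hlt : up_dist mu (fun s => up_dist (nu s) (fun t => lu_d F (x t)))
        (Defs.Delta (lu_sig F T x (uint mu nu) (eq_rect _ (lu_car F) a _ e2)))
        (upmap (fun s => lu_sig F T x (nu s)) (lu_sig F S (fun s => ulim x (nu s)) mu a)) < eps)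
    by (rewrite hii; exact he).
  pose proof (up_dist_lt mu _ k (fun s u v => updist_bdF (nu s) x u v) _ _ _ hlt) as hev.
  apply (uf_mp mu _ _ hev). intros s [u' [v' [hu' [hv' hd]]]].
  simpl in hv'.
  destruct (proj1_sig (lu_sig F S (fun s => ulim x (nu s)) mu a) s) as [w|] eqn:Hw; [|discriminate].
  simpl in hv'; injection hv' as <-.
  exists w; split.
  { unfold sg; rewrite cst_self; exact Hw. }
  pose proof (up_dist_lt (nu s) _ k (fun t => dF_bd (x t)) _ _ _ hd) as hin.
  apply (uf_mp (nu s) _ _ hin). intros t [u [v [hu [hv hduv]]]].
  exists u, v; split; [|split; [|exact hduv]].
  - rewrite (Delta_val _ _ _ hu') in hu. exact hu.
  - unfold sg; rewrite cst_self. exact hv.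
Qed.

Lemma sg_push_ev {S T} (M : S -> T) (x : T -> X) (mu : ultrafilter S)
  (rho : ultrafilter T) (hrho : forall A, rho A <-> mu (fun s => A (M s)))
  (p : X) (e1 : p = ulim (fun s => x (M s)) mu) (e2 : p = ulim x rho) (a : lu_car F p) eps :
  0 < eps ->
  mu (fun s => exists u v, proj1_sig (sg F (fun s => x (M s)) mu p e1 a) s = Some u /\
     proj1_sig (sg F x rho p e2 a) (M s) = Some v /\ lu_d F (x (M s)) u v < eps).
Proof.
  intros he.
  pose proof (sg_ii_ev mu (fun s => principal (M s)) x (fun s => x (M s))
     (fun s => ulim_principal hcpt hhd x (M s)) rho hrho p e1 e2 a eps he) as h.
  apply (uf_mp mu _ _ h). intros s [w [hw [u [v [hu [hv hd]]]]]].
  rewrite (sg_i x (M s) (x (M s)) _ eq_refl) in hv. injection hv as hvw. subst v.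
  exists w, u; split; [exact hw|split; [exact hu|rewrite dF_sym; exact hd]].
Qed.

Lemma Lconv_intro (eta : ultrafilter (Lcar F)) (f : Lcar F) (nu : ultrafilter X)
  (hnu : forall A, nu A <-> eta (fun g => A (projT1 g))) (hc : conv nu (projT1 f))
  (e : projT1 f = ulim (fun y => y) nu) :
  (forall eps, 0 < eps -> eta (fun g => exists z,
      proj1_sig (sg F (fun y => y) nu (projT1 f) e (projT2 f)) (projT1 g) = Some z /\
      lu_d F (projT1 g) z (projT2 g) < eps)) ->
  Lconv F eta f.
Proof.
  intros H.
  assert (hn : nu = push (@projT1 _ _) eta) by (apply uf_ext; exact hnu). subst nu.
  split; [exact hc|]. exists e. exact H.
Qed.

Lemma Lconv_elim (eta : ultrafilter (Lcar F)) (f : Lcar F) (nu : ultrafilter X)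
  (hnu : forall A, nu A <-> eta (fun g => A (projT1 g)))
  (e : projT1 f = ulim (fun y => y) nu) :
  Lconv F eta f ->
  forall eps, 0 < eps -> eta (fun g => exists z,
      proj1_sig (sg F (fun y => y) nu (projT1 f) e (projT2 f)) (projT1 g) = Some z /\
      lu_d F (projT1 g) z (projT2 g) < eps).
Proof.
  intros [hc [e0 H]] eps he.
  assert (hn : nu = push (@projT1 _ _) eta) by (apply uf_ext; exact hnu). subst nu.
  rewrite (sg_irr F _ _ _ e e0). exact (H eps he).
Qed.

Lemma Lconv_conv (eta : ultrafilter (Lcar F)) (f : Lcar F) (nu : ultrafilter X)
  (hnu : forall A, nu A <-> eta (fun g => A (projT1 g))) :
  Lconv F eta f -> conv nu (projT1 f).
Proof.
  intros [hc _].
  assert (hn : nu = push (@projT1 _ _) eta) by (apply uf_ext; exact hnu). subst nu. exact hc.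
Qed.

Lemma Lconv_principal (g : Lcar F) : Lconv F (principal g) g.
Proof.
  apply (Lconv_intro _ _ (principal (projT1 g))) with (e := ulim_id hcpt hhd _ _ (conv_principal X (projT1 g))).
  - intros A; simpl; tauto.
  - apply conv_principal.
  - intros eps he; simpl. exists (projT2 g).
    rewrite (sg_i (fun y => y) (projT1 g) (projT1 g) _ eq_refl). split; [reflexivity|].
    rewrite dF_refl; exact he.
Qed.

Lemma Lconv_diag (S : Type) (z : ultrafilter S) (th : S -> ultrafilter (Lcar F))
  (g : S -> Lcar F) (h : Lcar F) :
  (forall s, Lconv F (th s) (g s)) -> Lconv F (push g z) h -> Lconv F (uint z th) h.
Proof.
  intros Hth Hh.
  set (nus := fun s => push (@projT1 _ _) (th s)).
  set (ys := fun s => projT1 (g s)).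
  assert (hcs : forall s, conv (nus s) (ys s)) by (intros s; exact (proj1 (Hth s))).
  assert (hy : forall s, ys s = ulim (fun y => y) (nus s)) by (intros s; apply ulim_id; auto).
  set (nu' := uint z nus).
  assert (hch : conv (push ys z) (projT1 h)) by exact (proj1 Hh).
  assert (hc' : conv nu' (projT1 h)).
  { intros W hW hWh. simpl. apply (uf_mp z _ _ (hch W hW hWh)). intros s hs. exact (hcs s W hW hs). }
  set (e' := ulim_id hcpt hhd nu' _ hc').
  assert (e1 : projT1 h = ulim ys z) by (symmetry; apply (ulimX_eq X hcpt hhd); exact hch).
  set (mu' := push ys z).
  assert (e3 : projT1 h = ulim (fun y => y) mu') by (apply (ulim_id hcpt hhd); exact hch).
  apply (Lconv_intro (uint z th) h nu' (fun A => iff_refl _) hc' e').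
  intros eps he.
  set (dl := eps / 4).
  assert (hdl : 0 < dl) by (unfold dl; lra).
  pose proof (sg_ii_ev z nus (fun y => y) ys hy nu' (fun A => iff_refl _) (projT1 h) e1 e' (projT2 h) dl hdl) as F1.
  pose proof (sg_push_ev ys (fun y => y) z mu' (fun A => iff_refl _) (projT1 h) e1 e3 (projT2 h) dl hdl) as F2.
  pose proof (Lconv_elim (push g z) h mu' (fun A => iff_refl _) e3 Hh dl hdl) as F3.
  simpl in F3.
  apply (uf_mp z _ _ (uf_and z _ _ F1 (uf_and z _ _ F2 F3))).
  intros s [[w [hw hin]] [[u [v [hu [hv hduv]]]] [z3 [hz3 hdz3]]]].
  pose proof (eq_trans (eq_sym hw) hu) as hwu; injection hwu as hwu'; subst u.
  pose proof (eq_trans (eq_sym hz3) hv) as hzv; injection hzv as hzv'; subst v.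
  assert (hwg : lu_d F (ys s) w (projT2 (g s)) < 2 * dl).
  { pose proof (dF_tri (ys s) w z3 (projT2 (g s))) as ht.
    change (lu_d F (ys s) w z3 < dl) in hduv. change (lu_d F (ys s) z3 (projT2 (g s)) < dl) in hdz3. lra. }
  pose proof (sg_Lip (fun y => y) (nus s) (ys s) (hy s) w (projT2 (g s))) as F4.
  assert (F4' : up_dist (nus s) (fun y => lu_d F y) (sg F (fun y => y) (nus s) (ys s) (hy s) w)
                  (sg F (fun y => y) (nus s) (ys s) (hy s) (projT2 (g s))) < 2 * dl)
    by (eapply Rle_lt_trans; [exact F4|exact hwg]).
  pose proof (up_dist_lt (nus s) _ k (fun y => dF_bd y) _ _ _ F4') as F4e.
  pose proof (Lconv_elim (th s) (g s) (nus s) (fun A => iff_refl _) (hy s) (Hth s) dl hdl) as F5.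
  apply (uf_mp (th s) _ _ (uf_and (th s) _ _ hin (uf_and (th s) _ _ F4e F5))).
  intros g' [[u1 [v1 [hu1 [hv1 hd1]]]] [[v2 [z' [hv2 [hz' hd2]]]] [z5 [hz5 hd5]]]].
  exists u1; split; [exact hu1|].
  pose proof (eq_trans (eq_sym hv1) hv2) as h12; injection h12 as <-.
  pose proof (eq_trans (eq_sym hz') hz5) as h15; injection h15 as <-.
  pose proof (dF_tri (projT1 g') u1 v1 (projT2 g')).
  pose proof (dF_tri (projT1 g') v1 z' (projT2 g')).
  unfold dl in *; lra.
Qed.

Lemma Tconv (eta : ultrafilter (Lcar F)) (f : Lcar F) :
  (forall W, opn (s := Lspace F) W -> W f -> eta W) -> Lconv F eta f.
Proof.
  intros H. apply (barr (Lconv F) Lconv_principal Lconv_diag). exact H.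
Qed.


Lemma Ld_same x (a b : lu_car F x) : Ld F (existT _ x a) (existT _ x b) = lu_d F x a b.
Proof.
  unfold Ld; simpl. destruct (excluded_middle_informative (x = x)) as [e|n]; [|exfalso; apply n; reflexivity].
  change (lu_d F x (cst F e a) b = lu_d F x a b). rewrite cst_self; reflexivity.
Qed.

Lemma Ld_refl (g : Lcar F) : Ld F g g = 0.
Proof. destruct g as [x a]; rewrite Ld_same; apply dF_refl. Qed.

Lemma fam_land {S} (x : S -> X) (mu : ultrafilter S) p (e : p = ulim x mu) (a : lu_car F p)
  (W : Lcar F -> Prop) :
  opn (s := Lspace F) W -> W (existT _ p a) ->
  mu (fun s => exists z, proj1_sig (sg F x mu p e a) s = Some z /\ W (existT _ (x s) z)).
Proof.
  intros hW hWa.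
  set (c := sg F x mu p e a).
  set (dflt := fun y => epsilon (lu_ne F y) (fun _ => True)).
  set (secmap := fun s => existT (lu_car F) (x s)
                   (match proj1_sig c s with Some z => z | None => dflt (x s) end)).
  set (eta := push secmap mu).
  assert (hc : conv (push x mu) p) by (rewrite e; apply ulimX_spec; exact hcpt).
  set (e' := ulim_id hcpt hhd _ _ hc).
  assert (hL : Lconv F eta (existT _ p a)).
  { apply (Lconv_intro eta (existT _ p a) (push x mu) (fun A => iff_refl _) hc e').
    intros eps he.
    pose proof (sg_push_ev x (fun y => y) mu (push x mu) (fun A => iff_refl _) p e e' a eps he) as h.
    apply (uf_mp mu _ _ h). intros s [u [v [hu [hv hd]]]].
    simpl. exists v; split; [exact hv|].
    unfold secmap; simpl.
    destruct (proj1_sig c s) as [w|] eqn:Hc.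
    - pose proof (eq_trans (eq_sym Hc) hu) as hh; injection hh as hh'; subst w.
      rewrite dF_sym; exact hd.
    - pose proof (eq_trans (eq_sym Hc) hu); discriminate. }
  pose proof (hW _ hWa eta hL) as hetaW. simpl in hetaW.
  apply (uf_mp mu _ _ (uf_and mu _ _ hetaW (proj2_sig c))). intros s [h1 h2].
  unfold secmap in h1. destruct (proj1_sig c s) as [w|] eqn:Hc; [|contradiction].
  exists w; split; [first [exact Hc|reflexivity]|exact h1].
Qed.

Lemma L_proj_cont : @tcontinuous (Lspace F) X (@projT1 _ _).
Proof.
  intros W hW f hf eta hL. exact (proj1 hL W hW hf).
Qed.

Lemma L_proj_open : @open_map (Lspace F) X (@projT1 _ _).
Proof.
  intros U hU. apply open_by_uf. intros y [g [hg <-]] nu hc.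
  destruct g as [x0 a]; simpl in *.
  pose proof (fam_land (fun y => y) nu x0 (ulim_id hcpt hhd _ _ hc) a U hU hg) as h.
  apply (uf_mp nu _ _ h). intros y [z [_ hz]]. exists (existT _ y z); split; [exact hz|reflexivity].
Qed.

Lemma L_usc : forall e f : Lcar F, projT1 e = projT1 f -> forall r, Ld F e f < r ->
  exists U V, opn (s := Lspace F) U /\ opn (s := Lspace F) V /\ U e /\ V f /\
    forall e' f', U e' -> V f' -> projT1 e' = projT1 f' -> Ld F e' f' < r.
Proof.
  intros e f hp r hr. apply NNPP; intros hno.
  set (P := fun A : Lcar F * Lcar F -> Prop => exists U V, opn (s := Lspace F) U /\ opn (s := Lspace F) V /\ U e /\ V f /\
     A = (fun pr => U (fst pr) /\ V (snd pr) /\ projT1 (fst pr) = projT1 (snd pr) /\ r <= Ld F (fst pr) (snd pr))).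
  assert (hfull : opn (s := Lspace F) (fun _ => True)) by apply opn_full.
  destruct (uf_lemma P) as [z hz].
  - exists (fun pr => True /\ True /\ projT1 (fst pr) = projT1 (snd pr) /\ r <= Ld F (fst pr) (snd pr)).
    exists (fun _ => True), (fun _ => True); repeat split; auto.
  - intros A B [U [V [hU [hV [hUe [hVf ->]]]]]] [U' [V' [hU' [hV' [hUe' [hVf' ->]]]]]].
    exists (fun pr => (U (fst pr) /\ U' (fst pr)) /\ (V (snd pr) /\ V' (snd pr)) /\ projT1 (fst pr) = projT1 (snd pr) /\ r <= Ld F (fst pr) (snd pr)).
    split.
    + exists (fun g => U g /\ U' g), (fun g => V g /\ V' g); repeat split; auto; apply opn_inter; auto.
    + intros t [[a1 a2] [[b1 b2] [c d]]]; repeat split; auto.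
  - intros A [U [V [hU [hV [hUe [hVf ->]]]]]]. apply NNPP; intros hn. apply hno.
    exists U, V; repeat split; auto. intros e' f' he' hf' hp'.
    destruct (Rlt_or_le (Ld F e' f') r) as [h|h]; [exact h|exfalso; apply hn; exists (e', f'); simpl; auto].
  - assert (hbad : z (fun pr => True /\ True /\ projT1 (fst pr) = projT1 (snd pr) /\ r <= Ld F (fst pr) (snd pr))).
    { apply hz; exists (fun _ => True), (fun _ => True); repeat split; auto. }
    assert (hL1 : Lconv F (push fst z) e).
    { apply Tconv; intros W hW hWe. simpl.
      assert (h : z (fun pr => W (fst pr) /\ True /\ projT1 (fst pr) = projT1 (snd pr) /\ r <= Ld F (fst pr) (snd pr)))
        by (apply hz; exists W, (fun _ => True); repeat split; auto).
      apply (uf_mp z _ _ h); intros t [a _]; exact a. }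
    assert (hL2 : Lconv F (push snd z) f).
    { apply Tconv; intros W hW hWf. simpl.
      assert (h : z (fun pr => True /\ W (snd pr) /\ projT1 (fst pr) = projT1 (snd pr) /\ r <= Ld F (fst pr) (snd pr)))
        by (apply hz; exists (fun _ => True), W; repeat split; auto).
      apply (uf_mp z _ _ h); intros t [_ [a _]]; exact a. }
    destruct e as [x0 a], f as [x1 b]; simpl in hp; subst x1.
    rewrite Ld_same in hr.
    set (nu := push (fun pr => projT1 (fst pr)) z).
    assert (hnu1 : forall A, nu A <-> push fst z (fun g => A (projT1 g))) by (intros A; simpl; tauto).
    assert (hnu2 : forall A, nu A <-> push snd z (fun g => A (projT1 g))).
    { intros A; simpl; split; intros h; apply (uf_mp z _ _ (uf_and z _ _ h hbad)); intros t [h1 [_ [_ [h2 _]]]];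
        first [exact (eq_ind _ A h1 _ h2)|exact (eq_ind _ A h1 _ (eq_sym h2))]. }
    pose proof (Lconv_conv _ _ nu hnu1 hL1) as hc1. simpl in hc1.
    set (e1 := ulim_id hcpt hhd nu x0 hc1).
    set (dl := (r - lu_d F x0 a b) / 4).
    assert (hdl : 0 < dl) by (unfold dl; lra).
    pose proof (Lconv_elim (push fst z) (existT _ x0 a) nu hnu1 e1 hL1 dl hdl) as F1.
    pose proof (Lconv_elim (push snd z) (existT _ x0 b) nu hnu2 e1 hL2 dl hdl) as F2. simpl in F1, F2.
    pose proof (sg_Lip (fun y => y) nu x0 e1 a b) as hlip.
    assert (hlip' : up_dist nu (fun y => lu_d F y) (sg F (fun y => y) nu x0 e1 a) (sg F (fun y => y) nu x0 e1 b) < lu_d F x0 a b + dl)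
      by (eapply Rle_lt_trans; [exact hlip|lra]).
    pose proof (up_dist_lt nu _ k (fun y => dF_bd y) _ _ _ hlip') as F3. simpl in F3.
    apply (uf_0 z). apply (uf_mp z _ _ (uf_and z _ _ F1 (uf_and z _ _ F2 (uf_and z _ _ F3 hbad)))).
    intros [[y1 c1] [y2 c2]]; simpl.
    intros [[z1 [hz1 hd1]] [[z2 [hz2 hd2]] [[u [v [hu [hv huv]]]] [_ [_ [hy hle]]]]]].
    subst y2. rewrite Ld_same in hle.
    pose proof (eq_trans (eq_sym hz1) hu) as h1; injection h1 as h1'; subst u.
    pose proof (eq_trans (eq_sym hz2) hv) as h2; injection h2 as h2'; subst v.
    pose proof (dF_tri y1 c1 z1 c2). pose proof (dF_tri y1 z1 z2 c2).
    rewrite (dF_sym y1 c1 z1) in *.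
    unfold dl in *; lra.
Qed.

Lemma L_cond3 : forall W, opn (s := Lspace F) W -> forall f, W f ->
  exists V eps, opn (s := Lspace F) V /\ V f /\ 0 < eps /\
    (forall g, V g -> exists h, V h /\ projT1 g = projT1 h /\ Ld F g h < eps) /\
    (forall g, (exists h, V h /\ projT1 g = projT1 h /\ Ld F g h < eps) -> W g).
Proof.
  intros W hW f hWf. apply NNPP; intros hno.
  assert (hbad : forall V n, opn (s := Lspace F) V -> V f ->
     exists g h, ~ W g /\ V h /\ projT1 g = projT1 h /\ Ld F g h < / INR (S n)).
  { intros V n hV hVf. apply NNPP; intros hn. apply hno. exists V, (/ INR (S n)).
    repeat split; [exact hV|exact hVf|apply inv_small| |].
    - intros g hg; exists g; repeat split; [exact hg|rewrite Ld_refl; apply inv_small].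
    - intros g [h [hh [hp hd]]]. apply NNPP; intros hg. apply hn; exists g, h; auto. }
  set (P := fun A : Lcar F * Lcar F -> Prop => exists V n, opn (s := Lspace F) V /\ V f /\
     A = (fun pr => ~ W (fst pr) /\ V (snd pr) /\ projT1 (fst pr) = projT1 (snd pr) /\ Ld F (fst pr) (snd pr) < / INR (S n))).
  assert (hfull : opn (s := Lspace F) (fun _ => True)) by apply opn_full.
  destruct (uf_lemma P) as [z hz].
  - eexists; exists (fun _ => True), 0%nat; repeat split; auto.
  - intros A B [V [n [hV [hVf ->]]]] [V' [n' [hV' [hVf' ->]]]].
    exists (fun pr => ~ W (fst pr) /\ (V (snd pr) /\ V' (snd pr)) /\ projT1 (fst pr) = projT1 (snd pr) /\ Ld F (fst pr) (snd pr) < / INR (S (Nat.max n n'))).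
    split.
    + exists (fun g => V g /\ V' g), (Nat.max n n'); repeat split; auto; apply opn_inter; auto.
    + intros t [a1 [[b1 b2] [c d]]].
      pose proof (inv_mono (Nat.max n n') n ltac:(lia)). pose proof (inv_mono (Nat.max n n') n' ltac:(lia)).
      repeat split; auto; (eapply Rlt_le_trans; [exact d|assumption]).
  - intros A [V [n [hV [hVf ->]]]]. destruct (hbad V n hV hVf) as [g [h hh]]. exists (g, h); exact hh.
  - assert (hP0 : forall n, z (fun pr => ~ W (fst pr) /\ True /\ projT1 (fst pr) = projT1 (snd pr) /\ Ld F (fst pr) (snd pr) < / INR (S n))).
    { intros n; apply hz; exists (fun _ => True), n; repeat split; auto. }
    assert (hL2 : Lconv F (push snd z) f).
    { apply Tconv; intros V hV hVf. simpl.
      assert (h : z (fun pr => ~ W (fst pr) /\ V (snd pr) /\ projT1 (fst pr) = projT1 (snd pr) /\ Ld F (fst pr) (snd pr) < / INR (S 0)))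
        by (apply hz; exists V, 0%nat; repeat split; auto).
      apply (uf_mp z _ _ h); intros t [_ [a _]]; exact a. }
    set (nu := push (fun pr => projT1 (snd pr)) z).
    assert (hnu2 : forall A, nu A <-> push snd z (fun g => A (projT1 g))) by (intros A; simpl; tauto).
    assert (hnu1 : forall A, nu A <-> push fst z (fun g => A (projT1 g))).
    { intros A; simpl; split; intros h; apply (uf_mp z _ _ (uf_and z _ _ h (hP0 0%nat))); intros t [h1 [_ [_ [h2 _]]]];
        first [exact (eq_ind _ A h1 _ h2)|exact (eq_ind _ A h1 _ (eq_sym h2))]. }
    pose proof (Lconv_conv _ _ nu hnu2 hL2) as hc.
    set (e := ulim_id hcpt hhd nu _ hc).
    assert (hL1 : Lconv F (push fst z) f).
    { apply (Lconv_intro _ _ nu hnu1 hc e). intros eps he.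
      pose proof (Lconv_elim (push snd z) f nu hnu2 e hL2 (eps / 2) ltac:(lra)) as F2. simpl in F2.
      destruct (small_inv (eps / 2) ltac:(lra)) as [n hn].
      simpl. apply (uf_mp z _ _ (uf_and z _ _ F2 (hP0 n))).
      intros [[y1 c1] [y2 c2]]; simpl. intros [[z2 [hz2 hd2]] [_ [_ [hy hd]]]]. subst y2.
      exists z2; split; [exact hz2|]. rewrite Ld_same in hd.
      pose proof (dF_tri y1 z2 c2 c1). rewrite (dF_sym y1 c2 c1) in *.
      change (lu_d F y1 z2 c2 < eps / 2) in hd2. change (lu_d F y1 c1 c2 < / INR (S n)) in hd. lra. }
    pose proof (hW f hWf _ hL1) as h1. simpl in h1.
    apply (uf_notboth z (fun pr => W (fst pr)) h1). apply (uf_mp z _ _ (hP0 0%nat)). intros t [a _]; exact a.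
Qed.

Definition phiL x (a : fib (L_obj F) x) : lu_car F x := cst F (proj2_sig a) (projT2 (proj1_sig a)).
Definition psiL x (c : lu_car F x) : fib (L_obj F) x := exist (fun g : Lcar F => projT1 g = x) (existT _ x c) eq_refl.

Lemma phiL_psiL x c : phiL x (psiL x c) = c.
Proof. reflexivity. Qed.

Lemma psiL_phiL x a : psiL x (phiL x a) = a.
Proof.
  destruct a as [[y a'] p]; simpl in p. subst y. reflexivity.
Qed.

Lemma fdist_phiL x (a b : fib (L_obj F) x) : fdist (L_obj F) x a b = lu_d F x (phiL x a) (phiL x b).
Proof.
  rewrite <- (psiL_phiL x a), <- (psiL_phiL x b). unfold fdist; simpl. apply Ld_same.
Qed.

Lemma kmet_transfer {A B : Type} (dA : A -> A -> R) (dB : B -> B -> R) (phi : A -> B) (psi : B -> A) :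
  is_kmet k dB -> (forall a b, dA a b = dB (phi a) (phi b)) -> (forall c, phi (psi c) = c) ->
  (forall a, psi (phi a) = a) -> is_kmet k dA.
Proof.
  intros [h1 [h2 [h3 [h4 h5]]]] hd hpp hpp'.
  split; [intros a b; rewrite hd; apply h1|split; [|split; [|split]]].
  - intros a b; rewrite hd; split; [intros h; rewrite <- (hpp' a), <- (hpp' b); f_equal; apply h2; exact h|intros ->; apply h2; reflexivity].
  - intros a b; rewrite !hd; apply h3.
  - intros a b c; rewrite !hd; apply h4.
  - intros u hu. destruct (h5 (fun n => phi (u n))) as [l hl].
    + intros eps he; destruct (hu eps he) as [N hN]; exists N; intros m n hm hn; rewrite <- hd; auto.
    + exists (psi l); intros eps he; destruct (hl eps he) as [N hN]; exists N; intros n hn; rewrite hd, hpp; auto.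
Qed.

Lemma L_fib_kmet x : is_kmet k (fdist (L_obj F) x).
Proof.
  apply (kmet_transfer _ (lu_d F x) (phiL x) (psiL x)); [apply hF|apply fdist_phiL|apply phiL_psiL|apply psiL_phiL].
Qed.

Lemma L_bundle : is_Bundle k (L_obj F).
Proof.
  split; [exact L_fib_kmet|split; [exact L_usc|split; [exact L_proj_cont|split; [exact L_proj_open|exact L_cond3]]]].
Qed.

Lemma Ld_sym (g h : Lcar F) : projT1 g = projT1 h -> Ld F g h = Ld F h g.
Proof.
  destruct g as [x a], h as [y b]; simpl; intros e; subst y. rewrite !Ld_same; apply dF_sym.
Qed.

Lemma Ld_eq x y (e : x = y) (a : lu_car F x) (b : lu_car F y) :
  Ld F (existT _ x a) (existT _ y b) = lu_d F y (cst F e a) b.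
Proof. subst y; rewrite Ld_same; reflexivity. Qed.

Lemma existT_phiL y (a : fib (L_obj F) y) : existT (lu_car F) y (phiL y a) = proj1_sig a.
Proof. destruct a as [[y' a'] p]; simpl in p; subst y'; reflexivity. Qed.

Lemma eta_LUmor : is_LUmor F (R_obj (L_obj F)) psiL.
Proof.
  split.
  - intros x a b. change (Ld F (existT _ x a) (existT _ x b) <= lu_d F x a b). rewrite Ld_same; lra.
  - intros S x mu a.
    change (up_dist mu (fun s => fdist (L_obj F) (x s)) (Rsig (L_obj F) S x mu (psiL _ a))
             (upmap (fun s => psiL (x s)) (lu_sig F S x mu a)) = 0).
    apply (up_dist_zero mu _ k (fun s => fdist_bd X k (L_obj F) L_bundle (x s))).
    intros eps he.
    destruct (L_usc (existT _ _ a) (existT _ _ a) eq_refl eps) as [U [V [hU [hV [hUa [hVa hUV]]]]]];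
      [rewrite Ld_refl; exact he|].
    pose proof (sigX_land_push X hcpt k (L_obj F) L_bundle x mu (psiL _ a) U hU hUa) as h1.
    pose proof (fam_land x mu (ulim x mu) eq_refl a V hV hVa) as h2.
    apply (uf_mp mu _ _ (uf_and mu _ _ h1 h2)). intros s [[z [hz hzU]] [w [hw hwV]]] u v hu hv.
    pose proof (eq_trans (eq_sym hz) hu) as hh; injection hh as hh'; subst u.
    pose proof (eq_trans (f_equal (option_map (psiL (x s))) (eq_sym hw)) hv) as hh; simpl in hh; injection hh as hh'; subst v.
    apply Rlt_le. unfold fdist; simpl. apply hUV; [exact hzU|exact hwV|exact (fibp z)].
Qed.

Lemma be_LUmor : is_LUmor (R_obj (L_obj F)) F phiL.
Proof.
  split.
  - intros x a b. change (lu_d F x (phiL x a) (phiL x b) <= fdist (L_obj F) x a b). rewrite fdist_phiL; lra.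
  - intros S x mu a.
    change (up_dist mu (fun s => lu_d F (x s)) (lu_sig F S x mu (phiL _ a))
             (upmap (fun s => phiL (x s)) (Rsig (L_obj F) S x mu a)) = 0).
    apply (up_dist_zero mu _ k (fun s => dF_bd (x s))).
    intros eps he.
    destruct (L_usc (proj1_sig a) (proj1_sig a) eq_refl eps) as [U [V [hU [hV [hUa [hVa hUV]]]]]];
      [rewrite Ld_refl; exact he|].
    pose proof (sigX_land_push X hcpt k (L_obj F) L_bundle x mu a U hU hUa) as h1.
    assert (hVa' : V (existT _ (ulim x mu) (phiL _ a))) by (rewrite existT_phiL; exact hVa).
    pose proof (fam_land x mu (ulim x mu) eq_refl (phiL _ a) V hV hVa') as h2.
    apply (uf_mp mu _ _ (uf_and mu _ _ h1 h2)). intros s [[z [hz hzU]] [w [hw hwV]]] u v hu hv.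
    pose proof (eq_trans (eq_sym hw) hu) as hh; injection hh as hh'; subst u.
    pose proof (eq_trans (f_equal (option_map (phiL (x s))) (eq_sym hz)) hv) as hh; simpl in hh; injection hh as hh'; subst v.
    apply Rlt_le. rewrite <- Ld_same. rewrite existT_phiL.
    rewrite Ld_sym; [|exact (eq_sym (fibp z))].
    apply hUV; [exact hzU|exact hwV|exact (fibp z)].
Qed.

Lemma eta_iso : LU_iso F (R_obj (L_obj F)) psiL.
Proof.
  split; [exact eta_LUmor|]. exists phiL. split; [exact be_LUmor|split; [exact phiL_psiL|exact psiL_phiL]].
Qed.

End LSide.

Open Scope R_scope.

Lemma alpha_cst {X : Space} (F G : LUdata X) (al : forall x, lu_car F x -> lu_car G x) x y (e : x = y) a :
  al y (cst F e a) = cst G e (al x a).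
Proof. subst y; reflexivity. Qed.

Lemma Lmor_Bmor (X : Space) (hcpt : compact_space X) (hhd : hausdorff_space X) (k : R)
  (F G : LUdata X) (al : forall x, lu_car F x -> lu_car G x) :
  is_LeftUlt k F -> is_LeftUlt k G -> is_LUmor F G al ->
  is_Bmor (L_obj F) (L_obj G) (L_mor al).
Proof.
  intros hF hG [hal1 hal2]. split; [intros e; reflexivity|split].
  - intros W hW. simpl in hW |- *. intros g hg eta hL.
    set (nu := push (@projT1 _ _) eta).
    pose proof (Lconv_conv X F eta g nu (fun A => iff_refl _) hL) as hc.
    set (e := ulim_id hcpt hhd nu _ hc).
    assert (hL' : Lconv G (push (L_mor al) eta) (L_mor al g)).
    { apply (Lconv_intro X G (push (L_mor al) eta) (L_mor al g) nu (fun A => iff_refl _) hc e).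
      intros eps he.
      pose proof (Lconv_elim X F eta g nu (fun A => iff_refl _) e hL (eps / 2) ltac:(lra)) as F1.
      pose proof (hal2 X (fun y => y) nu (cst F e (projT2 g))) as h0.
      rewrite alpha_cst in h0.
      assert (hlt : up_dist nu (fun y => lu_d G y) (sg G (fun y => y) nu (projT1 g) e (al _ (projT2 g)))
                 (upmap (fun y => al y) (sg F (fun y => y) nu (projT1 g) e (projT2 g))) < eps / 2)
        by (refine (eq_ind_r (fun r => r < eps / 2) _ h0); lra).
      pose proof (up_dist_lt nu _ k (fun y => dF_bd X k G hG y) _ _ _ hlt) as F2.
      simpl. apply (uf_mp eta _ _ (uf_and eta _ _ F1 F2)).
      intros g' [[w [hw hd]] [u [v [hu [hv huv]]]]].
      exists u; split; [exact hu|].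
      pose proof (eq_trans (f_equal (option_map (al (projT1 g'))) (eq_sym hw)) hv) as hh; simpl in hh;
        injection hh as hh'; subst v.
      pose proof (dF_tri X k G hG _ u (al _ w) (al _ (projT2 g'))).
      pose proof (hal1 _ w (projT2 g')). lra. }
    exact (hW _ hg _ hL').
  - intros [x a] [y b]; simpl; intros e; subst y. unfold L_mor; simpl. rewrite !Ld_same. apply hal1.
Qed.

Definition epsE {X : Space} (E : BunData X) (g : tot (L_obj (R_obj E))) : tot E := proj1_sig (projT2 g).
Definition phiE {X : Space} (E : BunData X) (e : tot E) : tot (L_obj (R_obj E)) :=
  existT (lu_car (R_obj E)) (proj E e) (exist (fun e' => proj E e' = proj E e) e eq_refl).

Lemma cstR {X : Space} (E : BunData X) x y (e : x = y) (a : lu_car (R_obj E) x) :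
  proj1_sig (cst (R_obj E) e a) = proj1_sig a.
Proof. subst y; reflexivity. Qed.

Lemma eps_iso (X : Space) (hcpt : compact_space X) (hhd : hausdorff_space X) (k : R)
  (E : BunData X) : is_Bundle k E -> Bun_iso (L_obj (R_obj E)) E (epsE E).
Proof.
  intros hE. pose proof (R_LeftUlt X hcpt k E hE) as hR.
  split; [split; [|split]|].
  - intros g; exact (fibp (projT2 g)).
  - intros W hW. simpl. intros g hg eta hL.
    set (nu := push (@projT1 _ _) eta).
    pose proof (Lconv_conv X (R_obj E) eta g nu (fun A => iff_refl _) hL) as hc.
    set (e := ulim_id hcpt hhd nu _ hc).
    destruct (proj2 (proj2 (proj2 (proj2 hE))) W hW _ hg) as [V [dl [hV [hVg [hdl [_ hVW]]]]]].
    pose proof (Lconv_elim X (R_obj E) eta g nu (fun A => iff_refl _) e hL dl hdl) as F1.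
    assert (hVc : V (proj1_sig (cst (R_obj E) e (projT2 g)))) by (rewrite cstR; exact hVg).
    pose proof (sigX_land X hcpt k E hE (push (fun y => y) nu) (cst (R_obj E) e (projT2 g)) V hV hVc) as F2.
    simpl in F2. change (eta (fun g' => W (epsE E g'))).
    apply (uf_mp eta _ _ (uf_and eta _ _ F1 F2)). intros g' [[z [hz hd]] [z' [hz' hz'V]]].
    pose proof (eq_trans (eq_sym hz) hz') as hh; injection hh as hh'; subst z'.
    apply hVW. exists (proj1_sig z). split; [exact hz'V|split].
    + unfold epsE; rewrite (fibp (projT2 g')), (fibp z); reflexivity.
    + unfold epsE. rewrite (bd_sym X k E hE); [exact hd|rewrite (fibp (projT2 g')), (fibp z); reflexivity].
  - intros [x a] [y b]; simpl; intros e; subst y. rewrite Ld_same. unfold epsE; simpl; apply Rle_refl.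
  - exists (phiE E). split; [split; [|split]|split].
    + intros e; reflexivity.
    + intros W hW. apply open_by_uf. intros e he eta hc.
      change ((push (phiE E) eta) W). apply (hW _ he).
      set (nu := push (proj E) eta).
      assert (hcn : conv nu (proj E e)).
      { intros W' hW' hW'e. exact (hc _ (proj1 (proj2 (proj2 hE)) W' hW') hW'e). }
      set (e' := ulim_id hcpt hhd nu _ hcn).
      apply (Lconv_intro X (R_obj E) (push (phiE E) eta) (phiE E e) nu (fun A => iff_refl _) hcn e').
      intros eps he'.
      destruct (proj1 (proj2 hE) e e eq_refl eps) as [U [V [hU [hV [hUe [hVe hUV]]]]]];
        [rewrite (bd_refl X k E hE); exact he'|].
      assert (hUc : U (proj1_sig (cst (R_obj E) e' (projT2 (phiE E e))))) by (rewrite cstR; exact hUe).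
      pose proof (sigX_land X hcpt k E hE (push (fun y => y) nu) (cst (R_obj E) e' (projT2 (phiE E e))) U hU hUc) as F1.
      simpl in F1. simpl.
      apply (uf_mp eta _ _ (uf_and eta _ _ F1 (hc V hV hVe))). intros e'' [[z [hz hzU]] hV''].
      exists z; split; [exact hz|]. unfold fdist; simpl.
      apply hUV; [exact hzU|exact hV''|exact (fibp z)].
    + intros e f hp.
      change (Ld (R_obj E) (existT (lu_car (R_obj E)) (proj E e) (exist (fun e' => proj E e' = proj E e) e eq_refl))
                (existT (lu_car (R_obj E)) (proj E f) (exist (fun e' => proj E e' = proj E f) f eq_refl)) <= bd E e f).
      rewrite (Ld_eq X (R_obj E) _ _ hp).
      change (bd E (proj1_sig (cst (R_obj E) hp (exist (fun e' => proj E e' = proj E e) e eq_refl))) f <= bd E e f).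
      rewrite cstR; simpl; apply Rle_refl.
    + intros [x [e p]]; unfold phiE, epsE; simpl. subst x. reflexivity.
    + intros e; reflexivity.
Qed.

Open Scope R_scope.

Theorem theorem4p2 (X : Space) (k : R) :
  compact_space X -> hausdorff_space X -> 0 < k ->
  (forall E : BunData X, is_Bundle k E -> is_LeftUlt k (R_obj E)) /\
  (forall (E E' : BunData X) (psi : tot E -> tot E') (h : over E E' psi),
      is_Bundle k E -> is_Bundle k E' -> is_Bmor E E' psi ->
      is_LUmor (R_obj E) (R_obj E') (R_mor h)) /\
  (forall (E : BunData X) (h : over E E (fun e => e)) x (a : fib E x),
      R_mor h x a = a) /\
  (forall (E E' E'' : BunData X) (psi : tot E -> tot E') (psi' : tot E' -> tot E'')
          (h : over E E' psi) (h' : over E' E'' psi')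
          (h'' : over E E'' (fun e => psi' (psi e))) x (a : fib E x),
      R_mor h'' x a = R_mor h' x (R_mor h x a)) /\
  (forall F : LUdata X, is_LeftUlt k F -> is_Bundle k (L_obj F)) /\
  (forall (F G : LUdata X) (al : forall x, lu_car F x -> lu_car G x),
      is_LeftUlt k F -> is_LeftUlt k G -> is_LUmor F G al ->
      is_Bmor (L_obj F) (L_obj G) (L_mor al)) /\
  (forall (F : LUdata X) (g : Lcar F), L_mor (fun x (a : lu_car F x) => a) g = g) /\
  (forall (F G H : LUdata X) (al : forall x, lu_car F x -> lu_car G x)
          (be : forall x, lu_car G x -> lu_car H x) (g : Lcar F),
      L_mor (fun x a => be x (al x a)) g = L_mor be (L_mor al g)) /\
  exists (eta : forall (F : LUdata X) x, lu_car F x -> lu_car (R_obj (L_obj F)) x)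
         (eps : forall E : BunData X, tot (L_obj (R_obj E)) -> tot E),
    (forall F, is_LeftUlt k F -> LU_iso F (R_obj (L_obj F)) (eta F)) /\
    (forall (F G : LUdata X) (al : forall x, lu_car F x -> lu_car G x),
        is_LeftUlt k F -> is_LeftUlt k G -> is_LUmor F G al ->
        forall x (a : lu_car F x),
          proj1_sig (eta G x (al x a)) = L_mor al (proj1_sig (eta F x a))) /\
    (forall E, is_Bundle k E -> Bun_iso (L_obj (R_obj E)) E (eps E)) /\
    (forall (E E' : BunData X) (psi : tot E -> tot E') (h : over E E' psi),
        is_Bundle k E -> is_Bundle k E' -> is_Bmor E E' psi ->
        forall g, psi (eps E g) = eps E' (@L_mor X (R_obj E) (R_obj E') (R_mor h) g)) /\
    (forall E, is_Bundle k E ->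
        forall x (a : fib E x), eps E (proj1_sig (eta (R_obj E) x a)) = proj1_sig a) /\
    (forall F, is_LeftUlt k F ->
        forall g : Lcar F, eps (L_obj F) (L_mor (eta F) g) = g).
Proof.
  intros hc hh hk.
  split; [intros E hE; exact (R_LeftUlt X hc k E hE)|].
  split; [intros E E' psi h hE hE' hpsi; exact (R_mor_LUmor X hc k E E' psi h hE hE' hpsi)|].
  split; [intros; apply R_mor_id|].
  split; [intros; apply R_mor_comp|].
  split; [intros F hF; exact (L_bundle X hc hh k F hF)|].
  split; [intros F G al hF hG hal; exact (Lmor_Bmor X hc hh k F G al hF hG hal)|].
  split; [intros F g; destruct g; reflexivity|].
  split; [intros; reflexivity|].
  exists (fun F => psiL X F), (fun E => epsE E).
  split; [intros F hF; exact (eta_iso X hc hh k F hF)|].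
  split; [intros; reflexivity|].
  split; [intros E hE; exact (eps_iso X hc hh k E hE)|].
  split; [intros; reflexivity|].
  split; [intros; reflexivity|].
  intros F hF g; destruct g; reflexivity.
Qed.
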